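(* Let $\mathcal X,\mathcal Y$ be finite or countably infinite, $n\in\mathbb N$, and for $i=1,\dots,n$ let $P_{X_i},Q_{X_i}$ be probability mass functions with full support on $\mathcal X$ and $W_{Y_i|X_i}$ stochastic transformations from $\mathcal X$ to $\mathcal Y$. Let $P_{X^n}=\prod_iP_{X_i}$, $Q_{X^n}=\prod_iQ_{X_i}$, $W_{Y^n|X^n}(\underline y|\underline x)=\prod_iW_{Y_i|X_i}(y_i|x_i)$, and for $\lambda\in[0,1]$ let $R^{(\lambda)}_{X^n}(\underline x)=\prod_{i=1}^n(\lambda P_{X_i}(x_i)+(1-\lambda)Q_{X_i}(x_i))$. Let $R_{Y^n}^{(\lambda)}:=R_{X^n}^{(\lambda)}W_{Y^n|X^n}$, $Q_{Y^n}:=Q_{X^n}W_{Y^n|X^n}$, $P_{Y_i}:=P_{X_i}W_{Y_i|X_i}$, $Q_{Y_i}:=Q_{X_i}W_{Y_i|X_i}$. Let $f:(0,\infty)\to\mathbb R$ be convex and twice differentiable with $f(1)=0$, and let $$\xi_1(n,\lambda):=\prod_{i=1}^n\Big(1-\lambda+\lambda\inf_{x}\tfrac{P_{X_i}(x)}{Q_{X_i}(x)}\Big),\qquad \xi_2(n,\lambda):=\prod_{i=1}^n\Big(1-\lambda+\lambda\sup_x\tfrac{P_{X_i}(x)}{Q_{X_i}(x)}\Big).$$ Then: (a) for all $\lambda\in[0,1]$, $$D_f(R^{(\lambda)}_{X^n}\|Q_{X^n})-D_f(R^{(\lambda)}_{Y^n}\|Q_{Y^n})\ge c_f(\xi_1(n,\lambda),\xi_2(n,\lambda))\Big[\prod_{i=1}^n(1+\lambda^2\chi^2(P_{X_i}\|Q_{X_i}))-\prod_{i=1}^n(1+\lambda^2\chi^2(P_{Y_i}\|Q_{Y_i}))\Big]$$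 $$\ge c_f(\xi_1(n,\lambda),\xi_2(n,\lambda))\,\lambda^2\sum_{i=1}^n[\chi^2(P_{X_i}\|Q_{X_i})-\chi^2(P_{Y_i}\|Q_{Y_i})]\ge0;$$ (b) for all $\lambda\in[0,1]$, $$D_f(R^{(\lambda)}_{X^n}\|Q_{X^n})-D_f(R^{(\lambda)}_{Y^n}\|Q_{Y^n})\le e_f(\xi_1(n,\lambda),\xi_2(n,\lambda))\Big[\prod_{i=1}^n(1+\lambda^2\chi^2(P_{X_i}\|Q_{X_i}))-\prod_{i=1}^n(1+\lambda^2\chi^2(P_{Y_i}\|Q_{Y_i}))\Big];$$ (c) if $f$ has a continuous second derivative at $1$ and $\sup_x P_{X_i}(x)/Q_{X_i}(x)<\infty$ for all $i$, then $$\lim_{\lambda\to0^+}\frac{D_f(R^{(\lambda)}_{X^n}\|Q_{X^n})-D_f(R^{(\lambda)}_{Y^n}\|Q_{Y^n})}{\lambda^2}=\tfrac12f''(1)\sum_{i=1}^n[\chi^2(P_{X_i}\|Q_{X_i})-\chi^2(P_{Y_i}\|Q_{Y_i})],$$ and the lower bounds in (a) and the upper bound in (b), divided by $\lambda^2$, also converge to this limit as $\lambda\to0^+$.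
   Context: $D_f(P\|Q):=\sum_xQ(x)f(P(x)/Q(x))$ is the $f$-divergence and $\chi^2(P\|Q):=\sum_x(P(x)-Q(x))^2/Q(x)$. For $\xi_1\le1\le\xi_2$, with $\mathcal I(\xi_1,\xi_2):=[\xi_1,\xi_2]\cap(0,\infty)$, define $c_f(\xi_1,\xi_2):=\tfrac12\inf_{t\in\mathcal I(\xi_1,\xi_2)}f''(t)$ and $e_f(\xi_1,\xi_2):=\tfrac12\sup_{t\in\mathcal I(\xi_1,\xi_2)}f''(t)$. *)

(* Defs.v *)
From Stdlib Require Import Reals Lra Lia List ClassicalEpsilon.
Open Scope R_scope.

Fixpoint lsum {T : Type} (g : T -> R) (l : list T) : R :=
  match l with nil => 0 | x :: l' => g x + lsum g l' end.

Definition has_sum {T : Type} (g : T -> R) (s : R) : Prop :=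
  forall eps, 0 < eps -> exists F0 : list T, NoDup F0 /\
    forall F : list T, NoDup F -> incl F0 F -> Rabs (lsum g F - s) < eps.

Definition summable {T : Type} (g : T -> R) : Prop := exists s, has_sum g s.

(* The sum (meaningful when summable). *)
Definition Sum {T : Type} (g : T -> R) : R := epsilon (inhabits 0) (has_sum g).

(* supremum in (-oo, +oo]; None stands for +oo *)
Definition Sup (E : R -> Prop) : option R :=
  if excluded_middle_informative (bound E)
  then Some (epsilon (inhabits 0) (is_lub E)) else None.
(* infimum (used only for sets that are nonempty and bounded below) *)
Definition Inf (E : R -> Prop) : R :=
  - epsilon (inhabits 0) (is_lub (fun v => E (- v))).

Fixpoint prodn (n : nat) (a : nat -> R) : R :=
  match n with O => 1 | S m => prodn m a * a m end.
Fixpoint sumn (n : nat) (a : nat -> R) : R :=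
  match n with O => 0 | S m => sumn m a + a m end.
(* product of extended values in (0,+oo]; None = +oo *)
Fixpoint oprodn (n : nat) (a : nat -> option R) : option R :=
  match n with
  | O => Some 1
  | S m => match oprodn m a, a m with
           | Some u, Some v => Some (u * v)
           | _, _ => None end
  end.

Definition countable (T : Type) : Prop :=
  exists e : T -> nat, forall a b, e a = e b -> a = b.

Definition pmf_full {T : Type} (P : T -> R) : Prop :=
  (forall x, 0 < P x) /\ has_sum P 1.

(* stochastic transformation W(y|x) = W x y *)
Definition stochastic {A B : Type} (W : A -> B -> R) : Prop :=
  forall x, (forall y, 0 <= W x y) /\ has_sum (W x) 1.

Definition push {A B : Type} (P : A -> R) (W : A -> B -> R) : B -> R :=
  fun y => Sum (fun x => P x * W x y).

Definition vec (T : Type) (n : nat) : Type := {l : list T | length l = n}.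

Fixpoint prodi {T : Type} (p : nat -> T -> R) (k : nat) (l : list T) : R :=
  match l with nil => 1 | x :: l' => p k x * prodi p (S k) l' end.

Fixpoint prodW {A B : Type} (w : nat -> A -> B -> R) (k : nat)
    (xs : list A) (ys : list B) : R :=
  match xs, ys with
  | x :: xs', y :: ys' => w k x y * prodW w (S k) xs' ys'
  | _, _ => 1
  end.

Definition prodP {T : Type} (n : nat) (p : nat -> T -> R) : vec T n -> R :=
  fun x => prodi p 0 (proj1_sig x).

Definition prodCh {A B : Type} (n : nat) (w : nat -> A -> B -> R)
  : vec A n -> vec B n -> R :=
  fun x y => prodW w 0 (proj1_sig x) (proj1_sig y).

(* Q(x) f(P(x)/Q(x)), with the convention 0 f(0/0) = 0 (in the theorem,
   Q(x) = 0 only occurs together with P(x) = 0). *)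
Definition Df_term {T : Type} (f : R -> R) (P Q : T -> R) (x : T) : R :=
  if Req_dec_T (Q x) 0 then 0 else Q x * f (P x / Q x).
Definition Df {T : Type} (f : R -> R) (P Q : T -> R) : R := Sum (Df_term f P Q).

Definition chi2_term {T : Type} (P Q : T -> R) (x : T) : R :=
  if Req_dec_T (Q x) 0 then 0 else (P x - Q x) ^ 2 / Q x.
Definition chi2 {T : Type} (P Q : T -> R) : R := Sum (chi2_term P Q).

(* membership in I(xi1,xi2) = [xi1,xi2] ∩ (0,oo); xi2 = None means +oo *)
Definition inI (xi1 : R) (xi2 : option R) (t : R) : Prop :=
  0 < t /\ xi1 <= t /\ match xi2 with Some b => t <= b | None => True end.

Definition f2_values (f2 : R -> R) (xi1 : R) (xi2 : option R) : R -> Prop :=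
  fun v => exists t, inI xi1 xi2 t /\ v = f2 t.

Definition c_f (f2 : R -> R) (xi1 : R) (xi2 : option R) : R :=
  / 2 * Inf (f2_values f2 xi1 xi2).
Definition e_f (f2 : R -> R) (xi1 : R) (xi2 : option R) : option R :=
  match Sup (f2_values f2 xi1 xi2) with Some s => Some (/ 2 * s) | None => None end.

Definition ratio_set {T : Type} (P Q : T -> R) : R -> Prop :=
  fun v => exists x, v = P x / Q x.

Definition xi1 {T : Type} (n : nat) (PX QX : nat -> T -> R) (lam : R) : R :=
  prodn n (fun i => 1 - lam + lam * Inf (ratio_set (PX i) (QX i))).

(* with the convention 0 * (+oo) = 0 *)
Definition xi2 {T : Type} (n : nat) (PX QX : nat -> T -> R) (lam : R) : option R :=
  oprodn n (fun i => match Sup (ratio_set (PX i) (QX i)) with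
                     | Some s => Some (1 - lam + lam * s)
                     | None => if Req_dec_T lam 0 then Some 1 else None
                     end).

Definition lim0plus (g : R -> R) (L : R) : Prop :=
  forall eps, 0 < eps -> exists delta, 0 < delta /\
    forall lam, 0 < lam < delta -> Rabs (g lam - L) < eps.
Definition lim0plus_opt (g : R -> option R) (L : R) : Prop :=
  forall eps, 0 < eps -> exists delta, 0 < delta /\
    forall lam, 0 < lam < delta -> exists v, g lam = Some v /\ Rabs (v - L) < eps.

Definition convex_pos (f : R -> R) : Prop :=
  forall x y t, 0 < x -> 0 < y -> 0 <= t <= 1 ->
    f (t * x + (1 - t) * y) <= t * f x + (1 - t) * f y.

(* Main.v *)
Require Import Defs.
From Stdlib Require Import Reals Lra Lia List ClassicalEpsilon Classical.
Open Scope R_scope.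

Definition deq {T : Type} (a b : T) : {a = b} + {a <> b} := excluded_middle_informative (a = b).

Lemma lsum_app {T} (g : T -> R) l1 l2 : lsum g (l1 ++ l2) = lsum g l1 + lsum g l2.
Proof. induction l1; simpl; [ring | rewrite IHl1; ring]. Qed.

Lemma lsum_ext {T} (g h : T -> R) l : (forall x, g x = h x) -> lsum g l = lsum h l.
Proof. intros H; induction l; simpl; [auto| rewrite H, IHl; auto]. Qed.

Lemma lsum_plus {T} (g h : T -> R) l : lsum (fun x => g x + h x) l = lsum g l + lsum h l.
Proof. induction l; simpl; [ring | rewrite IHl; ring]. Qed.

Lemma lsum_scal {T} (g : T -> R) a l : lsum (fun x => a * g x) l = a * lsum g l.
Proof. induction l; simpl; [ring | rewrite IHl; ring]. Qed.

Lemma lsum_nonneg {T} (g : T -> R) l : (forall x, 0 <= g x) -> 0 <= lsum g l.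
Proof. intros H; induction l; simpl; [lra| specialize (H a); lra]. Qed.

Lemma lsum_le {T} (g h : T -> R) l : (forall x, g x <= h x) -> lsum g l <= lsum h l.
Proof. intros H; induction l; simpl; [lra| specialize (H a); lra]. Qed.

Lemma lsum_incl {T} (g : T -> R) l1 l2 : (forall x, 0 <= g x) -> NoDup l1 -> incl l1 l2 ->
  lsum g l1 <= lsum g l2.
Proof.
  intros Hg H1; revert l2; induction H1 as [|x l1 Hx H1 IH]; intros l2 Hi; simpl.
  - apply lsum_nonneg; auto.
  - assert (Hx2 : In x l2) by (apply Hi; left; auto).
    destruct (in_split _ _ Hx2) as [u [v ->]].
    rewrite lsum_app; simpl.
    assert (lsum g l1 <= lsum g (u ++ v)).
    { apply IH. intros y Hy. assert (In y (u ++ x :: v)) by (apply Hi; right; auto).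
      apply in_app_or in H. apply in_or_app. destruct H as [H|[H|H]]; auto.
      subst; contradiction. }
    rewrite lsum_app in H; lra.
Qed.

Lemma lsum_swap {A B} (F : A -> B -> R) la lb :
  lsum (fun b => lsum (fun a => F a b) la) lb = lsum (fun a => lsum (F a) lb) la.
Proof.
  induction la; simpl.
  - induction lb; simpl; auto. rewrite IHlb; ring.
  - rewrite lsum_plus, IHla; ring.
Qed.

Lemma has_sum_unique {T} (g : T -> R) s t : has_sum g s -> has_sum g t -> s = t.
Proof.
  intros Hs Ht.
  destruct (Req_dec s t) as [|Hne]; auto; exfalso.
  set (e := Rabs (s - t) / 2).
  assert (He : 0 < e) by (unfold e; assert (s - t <> 0) by lra; apply Rabs_pos_lt in H; lra).
  assert (Hne' : s - t <> 0) by lra.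
  destruct (Hs e He) as [F1 [N1 H1]]. destruct (Ht e He) as [F2 [N2 H2]].
  set (F := nodup deq (F1 ++ F2)).
  assert (NF : NoDup F) by apply NoDup_nodup.
  assert (I1 : incl F1 F) by (intros x Hx; apply nodup_In; apply in_or_app; auto).
  assert (I2 : incl F2 F) by (intros x Hx; apply nodup_In; apply in_or_app; auto).
  specialize (H1 F NF I1). specialize (H2 F NF I2).
  assert (Rabs (s - t) <= Rabs (lsum g F - s) + Rabs (lsum g F - t)).
  { replace (s - t) with (-(lsum g F - s) + (lsum g F - t)) by ring.
    eapply Rle_trans; [apply Rabs_triang|]. rewrite Rabs_Ropp; lra. }
  unfold e in *; lra.
Qed.

Lemma Sum_eq {T} (g : T -> R) s : has_sum g s -> Sum g = s.
Proof.
  intros H. unfold Sum. apply (has_sum_unique g); auto.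
  apply epsilon_spec. eauto.
Qed.

Lemma summable_Sum {T} (g : T -> R) : summable g -> has_sum g (Sum g).
Proof. intros [s H]. rewrite (Sum_eq g s H); auto. Qed.

Lemma has_sum_ext {T} (g h : T -> R) s : (forall x, g x = h x) -> has_sum g s -> has_sum h s.
Proof.
  intros E H eps He. destruct (H eps He) as [F0 [N0 H0]]. exists F0; split; auto.
  intros F NF IF. rewrite <- (lsum_ext g h F E). auto.
Qed.

Lemma has_sum_plus {T} (g h : T -> R) s t : has_sum g s -> has_sum h t ->
  has_sum (fun x => g x + h x) (s + t).
Proof.
  intros Hs Ht eps He.
  destruct (Hs (eps/2) ltac:(lra)) as [F1 [N1 H1]]. destruct (Ht (eps/2) ltac:(lra)) as [F2 [N2 H2]].
  exists (nodup deq (F1 ++ F2)); split; [apply NoDup_nodup|].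
  intros F NF IF.
  assert (I1 : incl F1 F) by (intros x Hx; apply IF; apply nodup_In; apply in_or_app; auto).
  assert (I2 : incl F2 F) by (intros x Hx; apply IF; apply nodup_In; apply in_or_app; auto).
  specialize (H1 F NF I1). specialize (H2 F NF I2).
  rewrite lsum_plus.
  replace (lsum g F + lsum h F - (s + t)) with ((lsum g F - s) + (lsum h F - t)) by ring.
  eapply Rle_lt_trans; [apply Rabs_triang|]. lra.
Qed.

Lemma has_sum_scal {T} (g : T -> R) a s : has_sum g s -> has_sum (fun x => a * g x) (a * s).
Proof.
  intros Hs eps He.
  destruct (Hs (eps / (Rabs a + 1))) as [F0 [N0 H0]].
  { apply Rdiv_lt_0_compat; auto. pose proof (Rabs_pos a); lra. }
  exists F0; split; auto. intros F NF IF. specialize (H0 F NF IF).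
  rewrite lsum_scal. replace (a * lsum g F - a * s) with (a * (lsum g F - s)) by ring.
  rewrite Rabs_mult.
  pose proof (Rabs_pos a). pose proof (Rabs_pos (lsum g F - s)).
  assert (Rabs (lsum g F - s) * (Rabs a + 1) < eps).
  { apply (Rmult_lt_compat_r (Rabs a + 1)) in H0; [|lra].
    unfold Rdiv in H0. rewrite Rmult_assoc, Rinv_l in H0; lra. }
  nra.
Qed.

Lemma has_sum_lin {T} (g h : T -> R) a b s t : has_sum g s -> has_sum h t ->
  has_sum (fun x => a * g x + b * h x) (a * s + b * t).
Proof. intros; apply has_sum_plus; apply has_sum_scal; auto. Qed.

Lemma has_sum_minus {T} (g h : T -> R) s t : has_sum g s -> has_sum h t ->
  has_sum (fun x => g x - h x) (s - t).
Proof.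
  intros Hs Ht. apply (has_sum_ext (fun x => 1 * g x + (-1) * h x)); [intros; ring|].
  replace (s - t) with (1 * s + (-1) * t) by ring. apply has_sum_lin; auto.
Qed.

Lemma has_sum_zero {T} : has_sum (fun _ : T => 0) 0.
Proof.
  intros eps He. exists nil; split; [constructor|]. intros F _ _.
  rewrite (lsum_ext _ (fun x => 0 * 0)) by (intros; ring). rewrite lsum_scal.
  replace (0 * lsum (fun _ => 0) F - 0) with 0 by ring. rewrite Rabs_R0; lra.
Qed.

Lemma has_sum_approx {T} (g : T -> R) s eps : has_sum g s -> 0 < eps ->
  exists F, NoDup F /\ s - eps < lsum g F.
Proof.
  intros H He. destruct (H eps He) as [F0 [N0 H0]]. exists F0; split; auto.
  specialize (H0 F0 N0 (incl_refl _)). apply Rabs_def2 in H0. lra.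
Qed.

Lemma has_sum_le {T} (g : T -> R) s F : (forall x, 0 <= g x) -> has_sum g s -> NoDup F ->
  lsum g F <= s.
Proof.
  intros Hg Hs NF. apply Rnot_lt_le; intro Hlt.
  set (eps := lsum g F - s).
  destruct (Hs eps ltac:(unfold eps; lra)) as [F0 [N0 H0]].
  set (F' := nodup deq (F0 ++ F)).
  assert (NF' : NoDup F') by apply NoDup_nodup.
  assert (I0 : incl F0 F') by (intros x Hx; apply nodup_In; apply in_or_app; auto).
  assert (I1 : incl F F') by (intros x Hx; apply nodup_In; apply in_or_app; auto).
  specialize (H0 F' NF' I0). apply Rabs_def2 in H0.
  pose proof (lsum_incl g F F' Hg NF I1). unfold eps in *; lra.
Qed.

Lemma has_sum_nonneg {T} (g : T -> R) s : (forall x, 0 <= g x) -> has_sum g s -> 0 <= s.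
Proof. intros Hg Hs. apply (has_sum_le g s nil Hg Hs). constructor. Qed.

Lemma has_sum_term {T} (g : T -> R) s x : (forall x, 0 <= g x) -> has_sum g s -> g x <= s.
Proof.
  intros Hg Hs. pose proof (has_sum_le g s (x :: nil) Hg Hs).
  simpl in H. assert (NoDup (x :: nil)) by (constructor; [auto| constructor]). specialize (H H0); lra.
Qed.

Lemma has_sum_intro {T} (g : T -> R) s : (forall x, 0 <= g x) ->
  (forall F, NoDup F -> lsum g F <= s) ->
  (forall eps, 0 < eps -> exists F, NoDup F /\ s - eps < lsum g F) -> has_sum g s.
Proof.
  intros Hg Hup Hlo eps He. destruct (Hlo eps He) as [F0 [N0 H0]]. exists F0; split; auto.
  intros F NF IF. pose proof (lsum_incl g F0 F Hg N0 IF). pose proof (Hup F NF).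
  apply Rabs_def1; lra.
Qed.

Lemma bounded_summable {T} (g : T -> R) M : (forall x, 0 <= g x) ->
  (forall F, NoDup F -> lsum g F <= M) -> exists s, has_sum g s /\ s <= M.
Proof.
  intros Hg Hb.
  set (E := fun v => exists F, NoDup F /\ v = lsum g F).
  assert (bE : bound E) by (exists M; intros v [F [NF ->]]; auto).
  assert (nE : exists v, E v) by (exists 0; exists nil; split; [constructor| auto]).
  destruct (completeness E bE nE) as [m [Hm1 Hm2]].
  exists m; split.
  - apply has_sum_intro; auto.
    + intros F NF. apply Hm1. exists F; auto.
    + intros eps He. apply NNPP; intro Hn.
      assert (m <= m - eps); [|lra].
      apply Hm2. intros v [F [NF ->]].
      apply Rnot_lt_le. intro; apply Hn. exists F; auto.
  - apply Hm2. intros v [F [NF ->]]; auto.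
Qed.

Lemma has_sum_compare {T} (g h : T -> R) s t : (forall x, g x <= h x) ->
  has_sum g s -> has_sum h t -> s <= t.
Proof.
  intros Hle Hs Ht. pose proof (has_sum_minus h g t s Ht Hs).
  apply has_sum_nonneg in H; [lra|]. intros x; specialize (Hle x); lra.
Qed.

Lemma dominated_summable {T} (g h : T -> R) t : (forall x, Rabs (g x) <= h x) ->
  has_sum h t -> summable g.
Proof.
  intros Hd Ht.
  assert (Hh : forall x, 0 <= h x) by (intros x; pose proof (Rabs_pos (g x)); specialize (Hd x); lra).
  assert (P1 : exists s, has_sum (fun x => (Rabs (g x) + g x) / 2) s /\ s <= t).
  { apply bounded_summable.
    - intros x; pose proof (Rabs_pos (g x)); pose proof (Rle_abs (-(g x))); rewrite Rabs_Ropp in H0; lra.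
    - intros F NF. eapply Rle_trans; [|apply (has_sum_le h t F Hh Ht NF)].
      apply lsum_le. intros x; pose proof (Rle_abs (g x)); specialize (Hd x); lra. }
  assert (P2 : exists s, has_sum (fun x => (Rabs (g x) - g x) / 2) s /\ s <= t).
  { apply bounded_summable.
    - intros x; pose proof (Rle_abs (g x)); lra.
    - intros F NF. eapply Rle_trans; [|apply (has_sum_le h t F Hh Ht NF)].
      apply lsum_le. intros x; pose proof (Rle_abs (-(g x))); rewrite Rabs_Ropp in H; specialize (Hd x); lra. }
  destruct P1 as [s1 [H1 _]]; destruct P2 as [s2 [H2 _]].
  exists (s1 - s2). eapply has_sum_ext; [|apply (has_sum_minus _ _ _ _ H1 H2)]. intros; simpl; field.
Qed.

Lemma dominated_nonneg {T} (g h : T -> R) t : (forall x, 0 <= g x <= h x) ->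
  has_sum h t -> exists s, has_sum g s /\ s <= t.
Proof.
  intros Hd Ht. apply bounded_summable; [intros x; apply Hd|].
  intros F NF. eapply Rle_trans; [|apply (has_sum_le h t F)]; auto.
  - apply lsum_le; intros; apply Hd.
  - intros x; specialize (Hd x); lra.
Qed.

Lemma has_sum_lsum {A B} (F : A -> B -> R) (G : B -> R) lb :
  (forall b, has_sum (fun a => F a b) (G b)) ->
  has_sum (fun a => lsum (F a) lb) (lsum G lb).
Proof.
  intros H; induction lb as [|b0 lb IH]; simpl.
  - apply has_sum_zero.
  - apply (has_sum_plus (fun a => F a b0)); auto.
Qed.

Lemma tonelli {A B} (F : A -> B -> R) (G : A -> R) (H : B -> R) s :
  (forall a b, 0 <= F a b) -> (forall a, has_sum (F a) (G a)) -> has_sum G s ->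
  (forall b, has_sum (fun a => F a b) (H b)) -> has_sum H s.
Proof.
  intros HF HG Hs HH.
  assert (HHn : forall b, 0 <= H b) by (intros b; apply (has_sum_nonneg (fun a => F a b)); [intros; apply HF| apply HH]).
  assert (HGn : forall a, 0 <= G a) by (intros a; apply (has_sum_nonneg (F a)); [intros; apply HF| apply HG]).
  apply has_sum_intro; auto.
  - intros Fb NFb. pose proof (has_sum_lsum F H Fb HH).
    apply (has_sum_compare _ G _ _ (fun a => has_sum_le (F a) (G a) Fb (HF a) (HG a) NFb) H0 Hs).
  - intros eps He.
    destruct (has_sum_approx G s (eps/2) Hs ltac:(lra)) as [Fa [NFa HFa]].
    assert (Cl : forall la, forall d, 0 < d -> exists Fb, NoDup Fb /\
                 lsum G la - d < lsum (fun a => lsum (F a) Fb) la).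
    { induction la; intros d Hd; simpl.
      - exists nil; split; [constructor| lra].
      - destruct (has_sum_approx (F a) (G a) (d/2) (HG a) ltac:(lra)) as [Fb1 [N1 H1]].
        destruct (IHla (d/2) ltac:(lra)) as [Fb2 [N2 H2]].
        exists (nodup deq (Fb1 ++ Fb2)); split; [apply NoDup_nodup|].
        assert (I1 : incl Fb1 (nodup deq (Fb1 ++ Fb2))) by (intros x Hx; apply nodup_In; apply in_or_app; auto).
        assert (I2 : incl Fb2 (nodup deq (Fb1 ++ Fb2))) by (intros x Hx; apply nodup_In; apply in_or_app; auto).
        pose proof (lsum_incl (F a) _ _ (HF a) N1 I1).
        assert (lsum (fun a => lsum (F a) Fb2) la <= lsum (fun a => lsum (F a) (nodup deq (Fb1 ++ Fb2))) la).
        { apply lsum_le. intros x. apply lsum_incl; auto. }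
        lra. }
    destruct (Cl Fa (eps/2) ltac:(lra)) as [Fb [NFb HFb]].
    exists Fb; split; auto.
    rewrite <- lsum_swap in HFb.
    assert (lsum (fun b => lsum (fun a => F a b) Fa) Fb <= lsum H Fb).
    { apply lsum_le. intros b. apply has_sum_le; auto. }
    lra.
Qed.

Lemma lsum_prod {A B} (p : A -> R) (q : B -> R) la lb :
  lsum (fun z => p (fst z) * q (snd z)) (list_prod la lb) = lsum p la * lsum q lb.
Proof.
  induction la; simpl; [ring|].
  rewrite lsum_app, IHla.
  assert (forall l, lsum (fun z => p (fst z) * q (snd z)) (map (fun y => (a, y)) l) = p a * lsum q l).
  { induction l; simpl; [ring| rewrite IHl; ring]. }
  rewrite H; ring.
Qed.

Lemma NoDup_prod {A B} (la : list A) (lb : list B) : NoDup la -> NoDup lb -> NoDup (list_prod la lb).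
Proof.
  intros Na Nb; induction Na; simpl; [constructor|].
  apply NoDup_app; auto.
  - apply NoDup_map_NoDup_ForallPairs; auto. intros u v _ _ E; inversion E; auto.
  - intros z Hz Hz2. apply in_map_iff in Hz. destruct Hz as [y [<- _]].
    apply in_prod_iff in Hz2. tauto.
Qed.

Lemma has_sum_pair {A B} (p : A -> R) (q : B -> R) sp sq :
  (forall a, 0 <= p a) -> (forall b, 0 <= q b) -> has_sum p sp -> has_sum q sq ->
  has_sum (fun z : A * B => p (fst z) * q (snd z)) (sp * sq).
Proof.
  intros Hp Hq Hsp Hsq.
  assert (Psp : 0 <= sp) by (apply (has_sum_nonneg p); auto).
  assert (Psq : 0 <= sq) by (apply (has_sum_nonneg q); auto).
  apply has_sum_intro.
  - intros z; apply Rmult_le_pos; auto.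
  - intros L NL.
    set (la := nodup deq (map fst L)). set (lb := nodup deq (map snd L)).
    assert (lsum (fun z => p (fst z) * q (snd z)) L <= lsum (fun z => p (fst z) * q (snd z)) (list_prod la lb)).
    { apply lsum_incl; auto. intros z; apply Rmult_le_pos; auto.
      intros [a b] Hz. apply in_prod_iff. split; apply nodup_In.
      - change a with (fst (a,b)); apply in_map; auto.
      - change b with (snd (a,b)); apply in_map; auto. }
    rewrite lsum_prod in H.
    pose proof (has_sum_le p sp la Hp Hsp (NoDup_nodup _ _)).
    pose proof (has_sum_le q sq lb Hq Hsq (NoDup_nodup _ _)).
    pose proof (lsum_nonneg p la Hp). pose proof (lsum_nonneg q lb Hq).
    assert (lsum p la * lsum q lb <= sp * sq) by (apply Rmult_le_compat; auto). lra.
  - intros eps He.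
    set (d := eps / (sp + sq + 1)).
    assert (Hd : 0 < d) by (unfold d; apply Rdiv_lt_0_compat; lra).
    assert (Hd2 : d * (sp + sq + 1) = eps) by (unfold d; field; lra).
    destruct (has_sum_approx p sp d Hsp Hd) as [la [Na Ha]].
    destruct (has_sum_approx q sq d Hsq Hd) as [lb [Nb Hb]].
    exists (list_prod la lb); split; [apply NoDup_prod; auto|].
    rewrite lsum_prod.
    pose proof (lsum_nonneg p la Hp). pose proof (lsum_nonneg q lb Hq).
    pose proof (has_sum_le p sp la Hp Hsp Na). pose proof (has_sum_le q sq lb Hq Hsq Nb).
    set (x := lsum p la) in *. set (y := lsum q lb) in *.
    assert (sp * sq - x * y = (sp - x) * sq + x * (sq - y)) by ring.
    assert ((sp - x) * sq <= d * sq) by (apply Rmult_le_compat_r; lra).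
    assert (x * (sq - y) <= sp * d) by (apply Rmult_le_compat; lra).
    nra.
Qed.

Lemma has_sum_bij {T T'} (e : T' -> T) (g : T -> R) s :
  (forall u v, e u = e v -> u = v) -> (forall x, exists u, e u = x) ->
  has_sum (fun u => g (e u)) s -> has_sum g s.
Proof.
  intros Inj Sur H eps He. destruct (H eps He) as [F0 [N0 H0]].
  exists (map e F0); split.
  - apply NoDup_map_NoDup_ForallPairs; auto. intros u v _ _; apply Inj.
  - intros F NF IF.
    assert (exists F', map e F' = F).
    { clear -Sur. induction F; [exists nil; auto|].
      destruct IHF as [F' E']. destruct (Sur a) as [u Eu]. exists (u :: F'); simpl; congruence. }
    destruct H1 as [F' <-].
    assert (NF' : NoDup F') by (eapply NoDup_map_inv; eauto).
    assert (IF' : incl F0 F').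
    { intros u Hu. assert (In (e u) (map e F')) by (apply IF; apply in_map; auto).
      apply in_map_iff in H1. destruct H1 as [v [Ev Hv]]. apply Inj in Ev; subst; auto. }
    specialize (H0 F' NF' IF').
    assert (lsum g (map e F') = lsum (fun u => g (e u)) F').
    { clear. induction F'; simpl; auto. rewrite IHF'; auto. }
    rewrite H1; auto.
Qed.

Lemma has_sum_singleton {T} (g : T -> R) v0 : (forall x, x = v0) -> has_sum g (g v0).
Proof.
  intros Hu eps He. exists (v0 :: nil); split; [constructor; [auto|constructor]|].
  intros F NF IF.
  assert (F = v0 :: nil).
  { destruct F as [|a F].
    - exfalso; apply (IF v0); left; auto.
    - destruct F as [|b F]; [rewrite (Hu a); auto|].
      exfalso. inversion NF; subst. apply H1. left. rewrite (Hu a), (Hu b); auto. }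
  subst; simpl. replace (g v0 + 0 - g v0) with 0 by ring. rewrite Rabs_R0; lra.
Qed.

Fixpoint prodL {T} (hs : list (T -> R)) (xs : list T) : R :=
  match hs, xs with h :: hs', x :: xs' => h x * prodL hs' xs' | _, _ => 1 end.
Definition prodS {T} (hs : list (T -> R)) : R := fold_right (fun h acc => Sum h * acc) 1 hs.

Lemma vec_eq {T n} (v w : vec T n) : proj1_sig v = proj1_sig w -> v = w.
Proof.
  destruct v as [l p], w as [l' p']; simpl; intros ->. f_equal. apply Eqdep_dec.UIP_dec. exact Nat.eq_dec.
Qed.

Definition vcons {T n} (a : T) (v : vec T n) : vec T (S n) :=
  exist _ (a :: proj1_sig v) (f_equal S (proj2_sig v)).

Lemma VP {T} : forall n (hs : list (T -> R)), length hs = n ->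
  (forall h, In h hs -> (forall x, 0 <= h x) /\ summable h) ->
  has_sum (fun x : vec T n => prodL hs (proj1_sig x)) (prodS hs).
Proof.
  induction n as [|n IH]; intros hs Hl Hh.
  - destruct hs; [|discriminate]. simpl.
    set (v0 := exist (fun l : list T => length l = 0%nat) nil eq_refl).
    apply (has_sum_ext (fun _ => prodL nil (proj1_sig v0))); [intros [[|a l] p]; simpl; auto|].
    apply (has_sum_singleton (fun x : vec T 0 => prodL nil (proj1_sig v0)) v0).
    intros [l p]. apply vec_eq. simpl. destruct l; [auto| discriminate].
  - destruct hs as [|h hs]; [discriminate|]. simpl in Hl. injection Hl as Hl.
    assert (Hh0 : (forall x, 0 <= h x) /\ summable h) by (apply Hh; left; auto).
    assert (IH' := IH hs Hl (fun h' Hi => Hh h' (or_intror Hi))).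
    apply (has_sum_bij (fun z : T * vec T n => vcons (fst z) (snd z))).
    + intros [a v] [b w] E. unfold vcons in E. simpl in E. injection E as E1 E2. subst.
      f_equal. apply vec_eq; auto.
    + intros [[|a l] Hq]; [discriminate|]. simpl in Hq. injection Hq; intro Hq2.
      exists (a, exist _ l Hq2). apply vec_eq; simpl; auto.
    + simpl. apply (has_sum_pair h (fun v : vec T n => prodL hs (proj1_sig v))).
      * apply Hh0.
      * intros [l p]; simpl.
        assert (Ht : forall h', In h' hs -> (forall x, 0 <= h' x)) by (intros h' Hi; apply Hh; right; auto).
        clear -Ht. revert l.
        induction hs; intros [|x l]; simpl; try lra.
        apply Rmult_le_pos. apply (Ht a (or_introl eq_refl)).
        apply IHhs. intros h' Hi; apply Ht; simpl; tauto.
      * apply summable_Sum; apply Hh0.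
      * auto.
Qed.

Lemma prodS_nonneg {T} (hs : list (T -> R)) :
  (forall h, In h hs -> (forall x, 0 <= h x) /\ summable h) -> 0 <= prodS hs.
Proof.
  induction hs; simpl; intros H; [lra|].
  apply Rmult_le_pos; [|apply IHhs; auto].
  destruct (H a (or_introl eq_refl)) as [H1 H2]. apply (has_sum_nonneg a); auto. apply summable_Sum; auto.
Qed.

Fixpoint genL {T} (p : nat -> T -> R) (k m : nat) : list (T -> R) :=
  match m with O => nil | S m' => p k :: genL p (S k) m' end.

Lemma genL_len {T} (p : nat -> T -> R) k m : length (genL p k m) = m.
Proof. revert k; induction m; simpl; auto. Qed.

Lemma genL_in {T} (p : nat -> T -> R) k m h : In h (genL p k m) -> exists i, (k <= i < k + m)%nat /\ h = p i.
Proof.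
  revert k; induction m; simpl; intros k H; [contradiction|].
  destruct H as [<-|H]; [exists k; split; [lia|auto]|].
  destruct (IHm (S k) H) as [i [Hi ->]]. exists i; split; [lia|auto].
Qed.

Lemma prodi_genL {T} (p : nat -> T -> R) k l : prodi p k l = prodL (genL p k (length l)) l.
Proof. revert k; induction l; simpl; intros; auto. rewrite IHl; auto. Qed.

Lemma prodn_shift (m : nat) (a : nat -> R) : prodn (S m) a = a 0%nat * prodn m (fun i => a (S i)).
Proof.
  revert a; induction m; intros a; simpl; [ring|].
  simpl in IHm. rewrite IHm. ring.
Qed.

Lemma prodn_ext (m : nat) (a b : nat -> R) : (forall i, (i < m)%nat -> a i = b i) -> prodn m a = prodn m b.
Proof. induction m; simpl; intros H; auto. rewrite IHm by (intros; apply H; lia). rewrite H by lia; auto. Qed.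

Lemma sumn_ext (m : nat) (a b : nat -> R) : (forall i, (i < m)%nat -> a i = b i) -> sumn m a = sumn m b.
Proof. induction m; simpl; intros H; auto. rewrite IHm by (intros; apply H; lia). rewrite H by lia; auto. Qed.

Lemma prodS_genL {T} (p : nat -> T -> R) k m : prodS (genL p k m) = prodn m (fun i => Sum (p (k + i)%nat)).
Proof.
  revert k; induction m; intros k; [simpl; auto|].
  rewrite prodn_shift. simpl genL. unfold prodS; simpl fold_right. fold (prodS (genL p (S k) m)).
  rewrite IHm. rewrite Nat.add_0_r. f_equal. apply prodn_ext. intros i _. f_equal. f_equal. lia.
Qed.

Lemma prodi_const (a : nat -> R) {T} k (l : list T) :
  prodi (fun i _ => a i) k l = prodn (length l) (fun i => a (k + i)%nat).
Proof.
  revert k; induction l; intros k; simpl length; simpl prodi; auto.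
  rewrite prodn_shift, IHl. rewrite Nat.add_0_r. f_equal. apply prodn_ext; intros; f_equal; lia.
Qed.

Fixpoint genY {A B} (r : nat -> A -> R) (W : nat -> A -> B -> R) (k : nat) (ys : list B) : list (A -> R) :=
  match ys with nil => nil | y :: ys' => (fun a => r k a * W k a y) :: genY r W (S k) ys' end.

Lemma genY_len {A B} r (W : nat -> A -> B -> R) k ys : length (genY r W k ys) = length ys.
Proof. revert k; induction ys; simpl; auto. Qed.

Lemma genY_in {A B} r (W : nat -> A -> B -> R) k ys h : In h (genY r W k ys) ->
  exists i y, (k <= i < k + length ys)%nat /\ h = (fun a => r i a * W i a y).
Proof.
  revert k; induction ys; simpl; intros k H; [contradiction|].
  destruct H as [<-|H]; [exists k, a; split; [lia|auto]|].
  destruct (IHys (S k) H) as [i [y [Hi ->]]]. exists i, y; split; [lia|auto].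
Qed.

Lemma prodiW_genY {A B} r (W : nat -> A -> B -> R) k xs ys : length xs = length ys ->
  prodi r k xs * prodW W k xs ys = prodL (genY r W k ys) xs.
Proof.
  revert k ys; induction xs; intros k [|y ys] E; simpl in *; try discriminate; try ring.
  injection E as E. rewrite <- (IHxs (S k) ys E). ring.
Qed.

Lemma prodS_genY {A B} r (W : nat -> A -> B -> R) k ys :
  prodS (genY r W k ys) = prodi (fun i y => Sum (fun a => r i a * W i a y)) k ys.
Proof.
  revert k; induction ys; intros k; simpl; auto. unfold prodS in *; simpl. rewrite IHys; auto.
Qed.

Fixpoint genX {A B} (W : nat -> A -> B -> R) (k : nat) (xs : list A) : list (B -> R) :=
  match xs with nil => nil | x :: xs' => W k x :: genX W (S k) xs' end.

Lemma genX_len {A B} (W : nat -> A -> B -> R) k xs : length (genX W k xs) = length xs.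
Proof. revert k; induction xs; simpl; auto. Qed.

Lemma genX_in {A B} (W : nat -> A -> B -> R) k xs h : In h (genX W k xs) ->
  exists i x, (k <= i < k + length xs)%nat /\ h = W i x.
Proof.
  revert k; induction xs; simpl; intros k H; [contradiction|].
  destruct H as [<-|H]; [exists k, a; split; [lia|auto]|].
  destruct (IHxs (S k) H) as [i [y [Hi ->]]]. exists i, y; split; [lia|auto].
Qed.

Lemma prodW_genX {A B} (W : nat -> A -> B -> R) k xs ys : prodW W k xs ys = prodL (genX W k xs) ys.
Proof. revert k ys; induction xs; intros k [|y ys]; simpl; auto. rewrite IHxs; auto. Qed.

Lemma prodS_genX {A B} (W : nat -> A -> B -> R) k xs :
  prodS (genX W k xs) = prodi (fun i x => Sum (W i x)) k xs.
Proof. revert k; induction xs; intros k; simpl; auto. unfold prodS in *; simpl. rewrite IHxs; auto. Qed.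

Lemma dlin f l s k t : derivable_pt_lim f t l ->
  derivable_pt_lim (fun x => s * (f x - k * x * x)) t (s * (l - 2 * k * t)).
Proof.
  intros H.
  pose proof (derivable_pt_lim_mult (fct_cte s) (f - fct_cte k * (id * id))%F t _ _
    (derivable_pt_lim_const s t)
    (derivable_pt_lim_minus f _ t l _ H (derivable_pt_lim_mult _ _ t _ _ (derivable_pt_lim_const k t)
       (derivable_pt_lim_mult id id t 1 1 (derivable_pt_lim_id t) (derivable_pt_lim_id t))))) as H2.
  match type of H2 with derivable_pt_lim _ _ ?v =>
    replace (s * (l - 2 * k * t)) with v by (unfold mult_fct, minus_fct, fct_cte, id; ring) end.
  eapply derivable_pt_lim_ext; [|exact H2]. intros z; unfold mult_fct, minus_fct, fct_cte, id; ring.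
Qed.

Lemma dlin2 f l s k t : derivable_pt_lim f t l ->
  derivable_pt_lim (fun x => s * (f x - 2 * k * x)) t (s * (l - 2 * k)).
Proof.
  intros H.
  pose proof (derivable_pt_lim_mult (fct_cte s) (f - fct_cte (2*k) * id)%F t _ _
    (derivable_pt_lim_const s t)
    (derivable_pt_lim_minus f _ t l _ H (derivable_pt_lim_mult _ _ t _ _ (derivable_pt_lim_const (2*k) t)
       (derivable_pt_lim_id t)))) as H2.
  match type of H2 with derivable_pt_lim _ _ ?v =>
    replace (s * (l - 2 * k)) with v by (unfold mult_fct, minus_fct, fct_cte, id; ring) end.
  eapply derivable_pt_lim_ext; [|exact H2]. intros z; unfold mult_fct, minus_fct, fct_cte, id; ring.
Qed.

Lemma inI_between lo hi a b c : inI lo hi a -> inI lo hi b -> a <= c <= b -> inI lo hi c.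
Proof.
  unfold inI; intros [A1 [A2 A3]] [B1 [B2 B3]] H. split; [lra| split; [lra|]].
  destruct hi; auto. lra.
Qed.

Lemma SL lo hi (g g1 g2 : R -> R) :
  (forall t, 0 < t -> derivable_pt_lim g t (g1 t)) ->
  (forall t, 0 < t -> derivable_pt_lim g1 t (g2 t)) ->
  (forall t, inI lo hi t -> 0 <= g2 t) ->
  forall m t, inI lo hi m -> inI lo hi t -> g m + g1 m * (t - m) <= g t.
Proof.
  intros D1 D2 Pos.
  assert (Mono : forall a b, inI lo hi a -> inI lo hi b -> a <= b -> g1 a <= g1 b).
  { intros a b Ha Hb Hab. destruct (Req_dec a b) as [->|Hne]; [lra|].
    destruct (MVT_cor2 g1 g2 a b) as [z [Ez Hz]]; [lra| |].
    - intros z Hz. apply D2. destruct Ha; lra.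
    - assert (inI lo hi z) by (apply (inI_between lo hi a b); auto; lra).
      specialize (Pos z H). nra. }
  intros m t Hm Ht.
  destruct (Rtotal_order m t) as [Hlt|[->|Hgt]].
  - destruct (MVT_cor2 g g1 m t) as [z [Ez Hz]]; [lra| |].
    + intros z Hz. apply D1. destruct Hm; lra.
    + assert (inI lo hi z) by (apply (inI_between lo hi m t); auto; lra).
      pose proof (Mono m z Hm H ltac:(lra)). nra.
  - lra.
  - destruct (MVT_cor2 g g1 t m) as [z [Ez Hz]]; [lra| |].
    + intros z Hz. apply D1. destruct Ht; lra.
    + assert (inI lo hi z) by (apply (inI_between lo hi t m); auto; lra).
      pose proof (Mono z m H Hm ltac:(lra)). nra.
Qed.

Lemma has_sum_scal1 {T} (g : T -> R) a : has_sum g 1 -> has_sum (fun x => a * g x) a.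
Proof. intros H. pose proof (has_sum_scal g a 1 H). rewrite Rmult_1_r in H0; auto. Qed.

Section DPsec.
Context {A B : Type} (Q Rr : A -> R) (W : A -> B -> R) (lo : R) (hi : option R).
Hypothesis HQ : forall a, 0 < Q a.
Hypothesis HR : forall a, 0 <= Rr a.
Hypothesis HQ1 : has_sum Q 1.
Hypothesis HR1 : has_sum Rr 1.
Hypothesis HW : forall a b, 0 <= W a b.
Hypothesis HW1 : forall a, has_sum (W a) 1.
Hypothesis Hrat : forall a, inI lo hi (Rr a / Q a).

Lemma W_le1 a b : W a b <= 1.
Proof. apply (has_sum_term (W a)); auto. Qed.

Lemma push_has (P : A -> R) b : (forall a, 0 <= P a) -> has_sum P 1 ->
  has_sum (fun a => P a * W a b) (push P W b).
Proof.
  intros HP HP1. unfold push. apply summable_Sum.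
  apply (dominated_summable _ P 1); auto. intros a.
  rewrite Rabs_pos_eq by (apply Rmult_le_pos; auto).
  pose proof (W_le1 a b). specialize (HP a). specialize (HW a b). nra.
Qed.

Lemma push_sum1 (P : A -> R) : (forall a, 0 <= P a) -> has_sum P 1 -> has_sum (push P W) 1.
Proof.
  intros HP HP1.
  apply (tonelli (fun a b => P a * W a b) P).
  - intros; apply Rmult_le_pos; auto.
  - intros a. apply has_sum_scal1; auto.
  - auto.
  - intros b; apply push_has; auto.
Qed.

Lemma Rr_pos a : 0 < Rr a.
Proof.
  destruct (Hrat a) as [H _]. specialize (HQ a).
  replace (Rr a) with ((Rr a / Q a) * Q a) by (field; lra). nra.
Qed.

Lemma push_zero b : push Q W b = 0 -> push Rr W b = 0.
Proof.
  intros H0.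
  assert (Hz : forall a, W a b = 0).
  { intros a. pose proof (has_sum_term (fun a => Q a * W a b) _ a
       (fun a => Rmult_le_pos _ _ (Rlt_le _ _ (HQ a)) (HW a b)) (push_has Q b (fun a => Rlt_le _ _ (HQ a)) HQ1)).
    rewrite H0 in H. specialize (HQ a). specialize (HW a b). simpl in H. nra. }
  pose proof (push_has Rr b HR HR1).
  apply (has_sum_unique _ _ _ H). apply (has_sum_ext (fun _ => 0)); [intros; rewrite Hz; ring| apply has_sum_zero].
Qed.

Lemma push_nonneg (P : A -> R) b : (forall a, 0 <= P a) -> has_sum P 1 -> 0 <= push P W b.
Proof.
  intros HP HP1. apply (has_sum_nonneg (fun a => P a * W a b)).
  - intros; apply Rmult_le_pos; auto.
  - apply push_has; auto.
Qed.

Lemma push_ratio b : push Q W b <> 0 -> inI lo hi (push Rr W b / push Q W b).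
Proof.
  intros Hne.
  set (QY := push Q W b). set (RY := push Rr W b).
  assert (HQY := push_has Q b (fun a => Rlt_le _ _ (HQ a)) HQ1).
  assert (HRY := push_has Rr b HR HR1).
  fold QY in HQY, Hne. fold RY in HRY.
  assert (QYp : 0 < QY) by (pose proof (push_nonneg Q b (fun a => Rlt_le _ _ (HQ a)) HQ1); fold QY in H; lra).
  split; [|split].
  - assert (exists a, 0 < W a b).
    { apply NNPP; intro Hn. apply Hne.
      apply (has_sum_unique _ _ _ HQY). apply (has_sum_ext (fun _ => 0)); [|apply has_sum_zero].
      intros a. assert (W a b = 0). { specialize (HW a b). apply Rle_antisym; auto. apply Rnot_lt_le; intro; apply Hn; eauto. }
      rewrite H; ring. }
    destruct H as [a Ha].
    pose proof (has_sum_term (fun a => Rr a * W a b) RY a (fun a => Rmult_le_pos _ _ (HR a) (HW a b)) HRY).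
    pose proof (Rr_pos a). simpl in H.
    apply Rdiv_lt_0_compat; auto. nra.
  - destruct (Hrat 0%nat) as [_ [_ _]] || idtac.
    assert (lo * QY <= RY).
    { apply (has_sum_compare (fun a => lo * (Q a * W a b)) (fun a => Rr a * W a b)); auto.
      - intros a. destruct (Hrat a) as [_ [H1 _]]. specialize (HQ a). specialize (HW a b).
        assert (lo * Q a <= Rr a).
        { apply (Rmult_le_compat_r (Q a)) in H1; [|lra]. unfold Rdiv in H1.
          rewrite Rmult_assoc, Rinv_l in H1; lra. }
        nra.
      - apply has_sum_scal; auto. }
    apply (Rmult_le_reg_r QY); auto. unfold Rdiv. rewrite Rmult_assoc, Rinv_l; lra.
  - destruct hi as [h|]; auto.
    assert (RY <= h * QY).
    { apply (has_sum_compare (fun a => Rr a * W a b) (fun a => h * (Q a * W a b))); auto.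
      - intros a. destruct (Hrat a) as [_ [_ H1]]. specialize (HQ a). specialize (HW a b).
        assert (Rr a <= h * Q a).
        { apply (Rmult_le_compat_r (Q a)) in H1; [|lra]. unfold Rdiv in H1.
          rewrite Rmult_assoc, Rinv_l in H1; lra. }
        nra.
      - apply has_sum_scal; auto. }
    apply (Rmult_le_reg_r QY); auto. unfold Rdiv. rewrite Rmult_assoc, Rinv_l; lra.
Qed.

Lemma DP (phi d : R -> R) Sx :
  (forall t, inI lo hi t -> 0 <= phi t) ->
  (forall m t, inI lo hi m -> inI lo hi t -> phi m + d m * (t - m) <= phi t) ->
  has_sum (fun a => Q a * phi (Rr a / Q a)) Sx ->
  exists Sy, has_sum (Df_term phi (push Rr W) (push Q W)) Sy /\ Sy <= Sx.
Proof.
  intros Hphi Hsl HSx.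
  set (F := fun a b => Q a * W a b * phi (Rr a / Q a)).
  set (G := fun a => Q a * phi (Rr a / Q a)).
  assert (HF : forall a b, 0 <= F a b).
  { intros a b; unfold F. apply Rmult_le_pos; [apply Rmult_le_pos; [apply Rlt_le; auto| auto]| auto]. }
  assert (HFG : forall a b, F a b <= G a).
  { intros a b; unfold F, G. pose proof (W_le1 a b). pose proof (Hphi _ (Hrat a)). specialize (HQ a).
    specialize (HW a b). assert (0 <= Q a * phi (Rr a / Q a)) by (apply Rmult_le_pos; lra). nra. }
  assert (HGs : forall a, has_sum (F a) (G a)).
  { intros a. unfold F, G. apply (has_sum_ext (fun b => (Q a * phi (Rr a / Q a)) * W a b)); [intros; ring|].
    apply has_sum_scal1; auto. }
  assert (HH : forall b, has_sum (fun a => F a b) (Sum (fun a => F a b))).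
  { intros b. apply summable_Sum. destruct (dominated_nonneg (fun a => F a b) G Sx) as [s [Hs _]].
    - intros a; split; auto.
    - exact HSx.
    - exists s; auto. }
  assert (Ton := tonelli F G (fun b => Sum (fun a => F a b)) Sx HF HGs HSx HH).
  set (RY := push Rr W). set (QY := push Q W).
  assert (Key : forall b, 0 <= Df_term phi RY QY b <= Sum (fun a => F a b)).
  { intros b. unfold Df_term. destruct (Req_dec_T (QY b) 0) as [E|E].
    - split; [lra|]. apply (has_sum_nonneg (fun a => F a b)); auto.
    - assert (Hm := push_ratio b E). fold RY QY in Hm. set (m := RY b / QY b) in *.
      assert (QYp : 0 < QY b) by (pose proof (push_nonneg Q b (fun a => Rlt_le _ _ (HQ a)) HQ1); fold QY in H; lra).
      split; [apply Rmult_le_pos; [lra| auto]|].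
      assert (HQY := push_has Q b (fun a => Rlt_le _ _ (HQ a)) HQ1).
      assert (HRY := push_has Rr b HR HR1). fold QY in HQY. fold RY in HRY.
      assert (phi m * QY b + d m * RY b - d m * m * QY b <= Sum (fun a => F a b)).
      { apply (has_sum_compare (fun a => phi m * (Q a * W a b) + d m * (Rr a * W a b) - d m * m * (Q a * W a b))
                               (fun a => F a b)); auto.
        - intros a. unfold F. pose proof (Hsl m _ Hm (Hrat a)). specialize (HQ a). specialize (HW a b).
          assert (Rr a * W a b = Q a * W a b * (Rr a / Q a)) by (field; lra).
          rewrite H0. set (r := Rr a / Q a) in *.
          assert (0 <= Q a * W a b) by (apply Rmult_le_pos; lra).
          assert (Q a * W a b * (phi m + d m * (r - m)) <= Q a * W a b * phi r) by (apply Rmult_le_compat_l; auto).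
          nra.
        - apply has_sum_minus; [apply has_sum_plus|]; apply has_sum_scal; auto. }
      assert (d m * RY b - d m * m * QY b = 0) by (unfold m; field; lra).
      unfold m in *. nra. }
  destruct (bounded_summable (Df_term phi RY QY) Sx) as [Sy [HSy HSyle]].
  - intros b; apply Key.
  - intros Fb NFb.
    assert (Hn : forall b, 0 <= Sum (fun a => F a b)) by (intros b; apply (has_sum_nonneg (fun a => F a b)); auto).
    eapply Rle_trans; [|apply (has_sum_le _ _ Fb Hn Ton NFb)].
    apply lsum_le; intros; apply Key.
  - exists Sy; split; auto.
Qed.

Definition sq {T} (r q : T -> R) (y : T) : R := if Req_dec_T (q y) 0 then 0 else r y ^ 2 / q y.

Lemma GL (f f1 f2 : R -> R) (kap sig Dx Sx2 Sy2 : R) :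
  (forall t, 0 < t -> derivable_pt_lim f t (f1 t)) ->
  (forall t, 0 < t -> derivable_pt_lim f1 t (f2 t)) ->
  (sig = 1 \/ sig = -1) ->
  (forall t, inI lo hi t -> 0 <= sig * (f2 t - 2 * kap)) ->
  inI lo hi 1 ->
  has_sum (Df_term f Rr Q) Dx ->
  has_sum (fun a => Rr a ^ 2 / Q a) Sx2 ->
  has_sum (sq (push Rr W) (push Q W)) Sy2 ->
  0 <= sig * ((Dx - Df f (push Rr W) (push Q W)) - kap * (Sx2 - Sy2)).
Proof.
  intros D1 D2 Hsig Hpos H1 HDx HSx2 HSy2.
  set (g := fun x => sig * (f x - kap * x * x)).
  set (g1 := fun x => sig * (f1 x - 2 * kap * x)).
  set (g2 := fun x => sig * (f2 x - 2 * kap)).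
  assert (Dg : forall t, 0 < t -> derivable_pt_lim g t (g1 t)) by (intros; apply dlin; auto).
  assert (Dg1 : forall t, 0 < t -> derivable_pt_lim g1 t (g2 t)) by (intros; apply dlin2; auto).
  assert (SLg := SL lo hi g g1 g2 Dg Dg1 Hpos).
  set (phi := fun t => g t - g 1 - g1 1 * (t - 1)).
  set (d := fun m => g1 m - g1 1).
  assert (Hphi : forall t, inI lo hi t -> 0 <= phi t).
  { intros t Ht. pose proof (SLg 1 t H1 Ht). unfold phi; lra. }
  assert (Hsl : forall m t, inI lo hi m -> inI lo hi t -> phi m + d m * (t - m) <= phi t).
  { intros m t Hm Ht. pose proof (SLg m t Hm Ht). unfold phi, d; lra. }
  set (Sx := sig * Dx - sig * kap * Sx2 - g 1 * 1 - g1 1 * (1 - 1)).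
  assert (HSx : has_sum (fun a => Q a * phi (Rr a / Q a)) Sx).
  { apply (has_sum_ext (fun a => sig * Df_term f Rr Q a - sig * kap * (Rr a ^ 2 / Q a) - g 1 * Q a - g1 1 * (Rr a - Q a))).
    - intros a. unfold Df_term. destruct (Req_dec_T (Q a) 0) as [E|E]; [specialize (HQ a); lra|].
      unfold phi, g, g1. field. auto.
    - unfold Sx. apply has_sum_minus; [apply has_sum_minus; [apply has_sum_minus|]|].
      + apply has_sum_scal; auto.
      + apply has_sum_scal; auto.
      + apply has_sum_scal; auto.
      + apply has_sum_scal; apply has_sum_minus; auto. }
  destruct (DP phi d Sx Hphi Hsl HSx) as [Sy [HSy Hle]].
  set (RY := push Rr W) in *. set (QY := push Q W) in *.
  assert (HQY1 : has_sum QY 1) by (apply push_sum1; auto; intros; apply Rlt_le; auto).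
  assert (HRY1 : has_sum RY 1) by (apply push_sum1; auto).
  assert (HDY : has_sum (Df_term f RY QY) (sig * (Sy + g 1 * 1 + g1 1 * (1 - 1)) + kap * Sy2)).
  { apply (has_sum_ext (fun b => sig * (Df_term phi RY QY b + g 1 * QY b + g1 1 * (RY b - QY b)) + kap * sq RY QY b)).
    - intros b. unfold Df_term, sq. destruct (Req_dec_T (QY b) 0) as [E|E].
      + assert (RY b = 0) by (apply push_zero; auto). rewrite E, H. ring.
      + unfold phi, g, g1. destruct Hsig as [-> | ->]; field; auto.
    - apply has_sum_plus; [apply has_sum_scal; apply has_sum_plus; [apply has_sum_plus|]|].
      + auto.
      + apply has_sum_scal; auto.
      + apply has_sum_scal; apply has_sum_minus; auto.
      + apply has_sum_scal; auto. }
  unfold Df. rewrite (Sum_eq _ _ HDY). unfold Sx in Hle.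
  destruct Hsig as [-> | ->]; nra.
Qed.

End DPsec.

Section Prodi.
Context {T : Type}.

Lemma prodi_ext (p q : nat -> T -> R) k l :
  (forall i a, (k <= i < k + length l)%nat -> p i a = q i a) -> prodi p k l = prodi q k l.
Proof.
  revert k; induction l; intros k H; simpl; auto.
  rewrite H by (simpl; lia). rewrite IHl; auto. intros i b Hi; apply H; simpl; lia.
Qed.

Lemma prodi_pos (p : nat -> T -> R) k l :
  (forall i a, (k <= i < k + length l)%nat -> 0 < p i a) -> 0 < prodi p k l.
Proof.
  revert k; induction l; intros k H; simpl; [lra|].
  apply Rmult_lt_0_compat; [apply H; simpl; lia| apply IHl; intros; apply H; simpl; lia].
Qed.

Lemma prodi_nonneg (p : nat -> T -> R) k l :
  (forall i a, (k <= i < k + length l)%nat -> 0 <= p i a) -> 0 <= prodi p k l.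
Proof.
  revert k; induction l; intros k H; simpl; [lra|].
  apply Rmult_le_pos; [apply H; simpl; lia| apply IHl; intros; apply H; simpl; lia].
Qed.

Lemma prodi_mult (p q : nat -> T -> R) k l :
  prodi (fun i a => p i a * q i a) k l = prodi p k l * prodi q k l.
Proof. revert k; induction l; intros k; simpl; [ring|]. rewrite IHl; ring. Qed.

Lemma prodi_le (p q : nat -> T -> R) k l :
  (forall i a, (k <= i < k + length l)%nat -> 0 <= p i a <= q i a) -> prodi p k l <= prodi q k l.
Proof.
  revert k; induction l; intros k H; simpl; [lra|].
  assert (H0 := H k a ltac:(simpl; lia)).
  assert (0 <= prodi p (S k) l) by (apply prodi_nonneg; intros; apply H; simpl; lia).
  assert (prodi p (S k) l <= prodi q (S k) l) by (apply IHl; intros; apply H; simpl; lia).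
  apply Rmult_le_compat; lra.
Qed.

Lemma prodi_div (p q : nat -> T -> R) k l :
  (forall i a, (k <= i < k + length l)%nat -> 0 < q i a) ->
  prodi p k l / prodi q k l = prodi (fun i a => p i a / q i a) k l.
Proof.
  intros H. assert (0 < prodi q k l) by (apply prodi_pos; auto).
  assert (prodi p k l = prodi (fun i a => p i a / q i a) k l * prodi q k l).
  { rewrite <- prodi_mult. apply prodi_ext. intros i a Hi. specialize (H i a Hi). field; lra. }
  rewrite H1. field; lra.
Qed.

Lemma prodi_sq (p q : nat -> T -> R) k l :
  (forall i a, (k <= i < k + length l)%nat -> 0 < q i a) ->
  prodi p k l ^ 2 / prodi q k l = prodi (fun i a => p i a ^ 2 / q i a) k l.
Proof.
  intros H. rewrite <- prodi_div by auto. f_equal. simpl. rewrite Rmult_1_r, <- prodi_mult.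
  apply prodi_ext; intros; ring.
Qed.

Lemma VPg n (p : nat -> T -> R) (s : nat -> R) :
  (forall i, (i < n)%nat -> (forall x, 0 <= p i x) /\ has_sum (p i) (s i)) ->
  has_sum (fun x : vec T n => prodi p 0 (proj1_sig x)) (prodn n s).
Proof.
  intros H.
  apply (has_sum_ext (fun x : vec T n => prodL (genL p 0 n) (proj1_sig x))).
  { intros [l Hl]; simpl. rewrite prodi_genL, Hl; auto. }
  replace (prodn n s) with (prodS (genL p 0 n)).
  - apply VP; [apply genL_len|]. intros h Hh. apply genL_in in Hh. destruct Hh as [i [Hi ->]].
    destruct (H i ltac:(lia)) as [H1 H2]. split; auto. exists (s i); auto.
  - rewrite prodS_genL. apply prodn_ext. intros i Hi. simpl. apply Sum_eq. apply H; auto.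
Qed.

End Prodi.

Lemma vec_len {T n} (x : vec T n) : length (proj1_sig x) = n.
Proof. apply (proj2_sig x). Qed.

Lemma prodn_nonneg n (a : nat -> R) : (forall i, (i < n)%nat -> 0 <= a i) -> 0 <= prodn n a.
Proof. induction n; simpl; intros H; [lra|]. apply Rmult_le_pos; [apply IHn; auto| apply H; lia]. Qed.

Lemma prodn_ge1 n (a : nat -> R) : (forall i, (i < n)%nat -> 1 <= a i) -> 1 <= prodn n a.
Proof. induction n; simpl; intros H; [lra|]. assert (1 <= prodn n a) by (apply IHn; auto).
  assert (1 <= a n) by (apply H; lia). nra. Qed.

Lemma prodn_le1 n (a : nat -> R) : (forall i, (i < n)%nat -> 0 <= a i <= 1) -> prodn n a <= 1.
Proof. induction n; simpl; intros H; [lra|]. assert (prodn n a <= 1) by (apply IHn; auto).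
  assert (0 <= prodn n a) by (apply prodn_nonneg; intros; apply H; lia).
  assert (0 <= a n <= 1) by (apply H; lia). nra. Qed.

Lemma prodn_one n : prodn n (fun _ => 1) = 1.
Proof. induction n; simpl; auto. rewrite IHn; ring. Qed.

Lemma oprodn_some n (a : nat -> option R) w : oprodn n a = Some w ->
  exists u, (forall i, (i < n)%nat -> a i = Some (u i)) /\ w = prodn n u.
Proof.
  revert w; induction n; simpl; intros w H.
  - injection H as <-. exists (fun _ => 0); split; [intros; lia| auto].
  - destruct (oprodn n a) as [u0|] eqn:E; [|discriminate].
    destruct (a n) as [v|] eqn:Ea; [|discriminate]. injection H as <-.
    destruct (IHn u0 eq_refl) as [u [Hu ->]].
    exists (fun i => if Nat.eq_dec i n then v else u i). split.
    + intros i Hi. destruct (Nat.eq_dec i n); [subst; auto| apply Hu; lia].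
    + f_equal; [apply prodn_ext; intros i Hi; destruct (Nat.eq_dec i n); [lia|auto]|].
      destruct (Nat.eq_dec n n); [auto| lia].
Qed.

Lemma oprodn_all n (a : nat -> option R) (u : nat -> R) :
  (forall i, (i < n)%nat -> a i = Some (u i)) -> oprodn n a = Some (prodn n u).
Proof.
  induction n; simpl; intros H; auto. rewrite IHn by (intros; apply H; lia). rewrite H by lia; auto.
Qed.

Lemma Inf_glb (E : R -> Prop) : (exists v, E v) -> (exists lb, forall v, E v -> lb <= v) ->
  (forall v, E v -> Inf E <= v) /\ (forall w, (forall v, E v -> w <= v) -> w <= Inf E).
Proof.
  intros [v0 Hv0] [lb Hlb].
  set (E' := fun v => E (- v)).
  assert (Hex : exists L, is_lub E' L).
  { destruct (completeness E') as [L HL].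
    - exists (- lb). intros v Hv. unfold E' in Hv. specialize (Hlb _ Hv). lra.
    - exists (- v0). unfold E'. rewrite Ropp_involutive; auto.
    - eauto. }
  unfold Inf. fold E'. pose proof (epsilon_spec (inhabits 0) (is_lub E') Hex) as [H1 H2].
  set (L := epsilon (inhabits 0) (is_lub E')) in *.
  split.
  - intros v Hv. assert (E' (- v)) by (unfold E'; rewrite Ropp_involutive; auto).
    specialize (H1 _ H). lra.
  - intros w Hw. assert (L <= - w).
    { apply H2. intros v Hv. unfold E' in Hv. specialize (Hw _ Hv). lra. }
    lra.
Qed.

Lemma Sup_some (E : R -> Prop) s : (exists v, E v) -> Sup E = Some s -> is_lub E s.
Proof.
  intros Hne. unfold Sup. destruct (excluded_middle_informative (bound E)) as [Hb|Hb]; [|discriminate].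
  intros H; injection H as <-. apply epsilon_spec.
  destruct (completeness E Hb Hne) as [m Hm]; exists m; exact Hm.
Qed.

Lemma Sup_bound (E : R -> Prop) : (exists v, E v) -> bound E -> exists s, Sup E = Some s /\ is_lub E s.
Proof.
  intros Hne Hb. unfold Sup. destruct (excluded_middle_informative (bound E)) as [_|Hb']; [|contradiction].
  eexists; split; [reflexivity|]. apply epsilon_spec.
  destruct (completeness E Hb Hne) as [m Hm]; exists m; exact Hm.
Qed.

Lemma conv_support (f f1 : R -> R) a b : convex_pos f -> 0 < a -> 0 < b ->
  derivable_pt_lim f a (f1 a) -> f a + f1 a * (b - a) <= f b.
Proof.
  intros Hc Ha Hb Hd.
  destruct (Req_dec b a) as [->|Hne]; [lra|].
  apply Rnot_lt_le; intro Hlt.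
  set (D := f a + f1 a * (b - a) - f b).
  assert (Hba : 0 < Rabs (b - a)) by (apply Rabs_pos_lt; lra).
  set (eps := D / (2 * Rabs (b - a))).
  assert (Heps : 0 < eps) by (unfold eps, D; apply Rdiv_lt_0_compat; lra).
  destruct (Hd eps Heps) as [del Hdel].
  set (s := Rmin 1 (del / (2 * Rabs (b - a)))).
  assert (Hs0 : 0 < s) by (unfold s; apply Rmin_glb_lt; [lra| apply Rdiv_lt_0_compat; [apply cond_pos| lra]]).
  assert (Hs1 : s <= 1) by (unfold s; apply Rmin_l).
  assert (Hs2 : s <= del / (2 * Rabs (b - a))) by (unfold s; apply Rmin_r).
  set (h := s * (b - a)).
  assert (Hh0 : h <> 0) by (unfold h; apply Rmult_integral_contrapositive; split; lra).
  assert (Habs : Rabs h = s * Rabs (b - a)) by (unfold h; rewrite Rabs_mult, Rabs_pos_eq; lra).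
  assert (Hhd : Rabs h < del).
  { rewrite Habs. apply (Rmult_le_compat_r (Rabs (b - a))) in Hs2; [|lra].
    unfold Rdiv in Hs2. replace (del * / (2 * Rabs (b - a)) * Rabs (b - a)) with (del / 2) in Hs2 by (field; lra).
    pose proof (cond_pos del). lra. }
  specialize (Hdel h Hh0 Hhd).
  assert (Hconv := Hc b a s Hb Ha (conj (Rlt_le _ _ Hs0) Hs1)).
  replace (s * b + (1 - s) * a) with (a + h) in Hconv by (unfold h; ring).
  assert (Rabs (f (a + h) - f a - h * f1 a) < Rabs h * eps).
  { replace (f (a + h) - f a - h * f1 a) with (h * ((f (a + h) - f a) / h - f1 a)) by (field; auto).
    rewrite Rabs_mult. apply Rmult_lt_compat_l; [apply Rabs_pos_lt; auto| auto]. }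
  rewrite Habs in H. unfold eps in H.
  replace (s * Rabs (b - a) * (D / (2 * Rabs (b - a)))) with (s * D / 2) in H by (field; lra).
  apply Rabs_def2 in H. destruct H as [_ H].
  assert (E1 : h * f1 a = s * ((b - a) * f1 a)) by (unfold h; ring).
  assert (E2 : s * f b + (1 - s) * f a - f a = s * (f b - f a)) by ring.
  assert (E3 : s * (f b - f a) = s * ((b - a) * f1 a) - s * D) by (unfold D; ring).
  assert (0 < s * D) by (apply Rmult_lt_0_compat; unfold D; lra).
  lra.
Qed.

Lemma f2_nonneg (f f1 f2 : R -> R) : convex_pos f ->
  (forall t, 0 < t -> derivable_pt_lim f t (f1 t)) ->
  (forall t, 0 < t -> derivable_pt_lim f1 t (f2 t)) ->
  forall t, 0 < t -> 0 <= f2 t.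
Proof.
  intros Hc D1 D2.
  assert (Mono : forall a b, 0 < a -> a < b -> f1 a <= f1 b).
  { intros a b Ha Hab. pose proof (conv_support f f1 a b Hc Ha ltac:(lra) (D1 a Ha)).
    pose proof (conv_support f f1 b a Hc ltac:(lra) Ha (D1 b ltac:(lra))). nra. }
  intros t Ht. apply Rnot_lt_le; intro Hn.
  destruct (D2 t Ht (- f2 t) ltac:(lra)) as [del Hdel].
  set (h := Rmin (del / 2) (t / 2)).
  assert (Hh : 0 < h) by (unfold h; apply Rmin_glb_lt; pose proof (cond_pos del); lra).
  assert (Hhd : Rabs h < del) by (rewrite Rabs_pos_eq by lra; unfold h; pose proof (Rmin_l (del/2) (t/2)); pose proof (cond_pos del); lra).
  specialize (Hdel h ltac:(lra) Hhd).
  pose proof (Mono t (t + h) Ht ltac:(lra)).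
  assert (0 <= (f1 (t + h) - f1 t) / h) by (unfold Rdiv; apply Rmult_le_pos; [lra| apply Rlt_le, Rinv_0_lt_compat; lra]).
  apply Rabs_def2 in Hdel. lra.
Qed.

Lemma has_sum_inhabited {T} (g : T -> R) s : has_sum g s -> s <> 0 -> exists x : T, True.
Proof.
  intros H Hs. assert (0 < Rabs s) by (apply Rabs_pos_lt; auto).
  destruct (H (Rabs s) H0) as [F0 [N0 H0']]. specialize (H0' F0 N0 (incl_refl _)).
  destruct F0 as [|x F0]; [|exists x; auto].
  simpl in H0'. replace (0 - s) with (- s) in H0' by ring. rewrite Rabs_Ropp in H0'. lra.
Qed.

Lemma sq_prodi {T} (r q : nat -> T -> R) k l :
  (if Req_dec_T (prodi q k l) 0 then 0 else prodi r k l ^ 2 / prodi q k l)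
  = prodi (fun i a => if Req_dec_T (q i a) 0 then 0 else r i a ^ 2 / q i a) k l.
Proof.
  revert k; induction l as [|a l IH]; intros k.
  - simpl. destruct (Req_dec_T 1 0); [lra| field].
  - specialize (IH (S k)). cbn [prodi].
    destruct (Req_dec_T (q k a) 0) as [E|E].
    + rewrite E. rewrite Rmult_0_l. destruct (Req_dec_T 0 0); [ring| lra].
    + destruct (Req_dec_T (prodi q (S k) l) 0) as [E2|E2].
      * rewrite <- IH, E2. rewrite Rmult_0_r. destruct (Req_dec_T 0 0); [ring| lra].
      * rewrite <- IH. destruct (Req_dec_T (q k a * prodi q (S k) l) 0) as [E3|E3].
        -- exfalso. apply Rmult_integral in E3; tauto.
        -- field; auto.
Qed.

Section Main.
Context (X Y : Type) (n : nat) (PX QX : nat -> X -> R) (W : nat -> X -> Y -> R) (f f1 f2 : R -> R).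
Hypothesis HP : forall i, (i < n)%nat -> pmf_full (PX i).
Hypothesis HQ : forall i, (i < n)%nat -> pmf_full (QX i).
Hypothesis HW : forall i, (i < n)%nat -> stochastic (W i).
Hypothesis Hconv : convex_pos f.
Hypothesis Hf1 : forall t, 0 < t -> derivable_pt_lim f t (f1 t).
Hypothesis Hf2 : forall t, 0 < t -> derivable_pt_lim f1 t (f2 t).

Definition Ri (lam : R) (i : nat) (x : X) : R := lam * PX i x + (1 - lam) * QX i x.
Definition mi (i : nat) : R := Inf (ratio_set (PX i) (QX i)).

Lemma Ri_pos lam i x : 0 <= lam <= 1 -> (i < n)%nat -> 0 < Ri lam i x.
Proof.
  intros Hl Hi. destruct (HP i Hi) as [P1 _]. destruct (HQ i Hi) as [Q1 _].
  specialize (P1 x); specialize (Q1 x). unfold Ri.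
  destruct (Req_dec lam 0) as [->|Hn]; [lra|]. nra.
Qed.

Lemma Ri_sum lam i : (i < n)%nat -> has_sum (Ri lam i) 1.
Proof.
  intros Hi. destruct (HP i Hi) as [_ P1]. destruct (HQ i Hi) as [_ Q1].
  replace 1 with (lam * 1 + (1 - lam) * 1) by ring. apply has_sum_lin; auto.
Qed.

Lemma ratio_ne i : (i < n)%nat -> exists v, ratio_set (PX i) (QX i) v.
Proof.
  intros Hi. destruct (HP i Hi) as [_ P1].
  destruct (has_sum_inhabited _ _ P1 ltac:(lra)) as [x _]. exists (PX i x / QX i x), x; auto.
Qed.

Lemma ratio_pos i x : (i < n)%nat -> 0 < PX i x / QX i x.
Proof.
  intros Hi. destruct (HP i Hi) as [P1 _]. destruct (HQ i Hi) as [Q1 _].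
  apply Rdiv_lt_0_compat; auto.
Qed.

Lemma mi_bounds i : (i < n)%nat ->
  0 <= mi i /\ (forall x, mi i <= PX i x / QX i x) /\ mi i <= 1.
Proof.
  intros Hi.
  destruct (Inf_glb (ratio_set (PX i) (QX i)) (ratio_ne i Hi)) as [H1 H2].
  { exists 0. intros v [x ->]. apply Rlt_le, ratio_pos; auto. }
  fold (mi i) in H1, H2.
  split; [apply H2; intros v [x ->]; apply Rlt_le, ratio_pos; auto|].
  assert (Hr : forall x, mi i <= PX i x / QX i x) by (intros x; apply H1; exists x; auto).
  split; auto.
  destruct (HP i Hi) as [_ P1]. destruct (HQ i Hi) as [Q1 Q2].
  assert (mi i * 1 <= 1); [|lra].
  apply (has_sum_compare (fun x => mi i * QX i x) (PX i)); auto.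
  - intros x. specialize (Hr x). specialize (Q1 x).
    apply (Rmult_le_compat_r (QX i x)) in Hr; [|lra]. unfold Rdiv in Hr.
    rewrite Rmult_assoc, Rinv_l in Hr; lra.
  - apply has_sum_scal; auto.
Qed.

Lemma sup_bounds i s : (i < n)%nat -> Sup (ratio_set (PX i) (QX i)) = Some s ->
  (forall x, PX i x / QX i x <= s) /\ 1 <= s.
Proof.
  intros Hi Hs. destruct (Sup_some _ _ (ratio_ne i Hi) Hs) as [H1 _].
  assert (Hr : forall x, PX i x / QX i x <= s) by (intros x; apply H1; exists x; auto).
  split; auto.
  destruct (HP i Hi) as [_ P1]. destruct (HQ i Hi) as [Q1 Q2].
  assert (1 <= s * 1); [|lra].
  apply (has_sum_compare (PX i) (fun x => s * QX i x)); auto.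
  - intros x. specialize (Hr x). specialize (Q1 x).
    apply (Rmult_le_compat_r (QX i x)) in Hr; [|lra]. unfold Rdiv in Hr.
    rewrite Rmult_assoc, Rinv_l in Hr; lra.
  - apply has_sum_scal; auto.
Qed.

Lemma xi1_bounds lam : 0 <= lam <= 1 -> 0 <= xi1 n PX QX lam <= 1.
Proof.
  intros Hl. unfold xi1. split.
  - apply prodn_nonneg. intros i Hi. destruct (mi_bounds i Hi) as [A1 _]. fold (mi i). nra.
  - apply prodn_le1. intros i Hi. destruct (mi_bounds i Hi) as [A1 [_ A3]]. fold (mi i). nra.
Qed.

Lemma xi2_ge1 lam w : 0 <= lam <= 1 -> xi2 n PX QX lam = Some w -> 1 <= w.
Proof.
  intros Hl H. unfold xi2 in H. apply oprodn_some in H. destruct H as [u [Hu ->]].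
  apply prodn_ge1. intros i Hi. specialize (Hu i Hi).
  destruct (Sup (ratio_set (PX i) (QX i))) as [s|] eqn:Es.
  - injection Hu as <-. destruct (sup_bounds i s Hi Es). nra.
  - destruct (Req_dec_T lam 0); [injection Hu as <-; lra| discriminate].
Qed.

Lemma one_in_I lam : 0 <= lam <= 1 -> inI (xi1 n PX QX lam) (xi2 n PX QX lam) 1.
Proof.
  intros Hl. split; [lra| split; [apply xi1_bounds; auto|]].
  destruct (xi2 n PX QX lam) eqn:E; auto. apply (xi2_ge1 lam); auto.
Qed.

Definition QXp := prodP n QX.
Definition RXl lam := prodP n (Ri lam).
Definition Wch := prodCh n W.

Lemma QXn_pos x : 0 < QXp x.
Proof.
  unfold QXp, prodP. apply prodi_pos. intros i a Hi. rewrite vec_len in Hi. apply (HQ i ltac:(lia)).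
Qed.

Lemma RX_pos lam x : 0 <= lam <= 1 -> 0 < RXl lam x.
Proof.
  intros Hl. unfold RXl, prodP. apply prodi_pos. intros i a Hi. rewrite vec_len in Hi. apply Ri_pos; auto; lia.
Qed.

Lemma QXn_sum : has_sum QXp 1.
Proof.
  rewrite <- (prodn_one n). apply VPg. intros i Hi. destruct (HQ i Hi) as [H1 H2].
  split; auto. intros; apply Rlt_le; auto.
Qed.

Lemma RX_sum lam : 0 <= lam <= 1 -> has_sum (RXl lam) 1.
Proof.
  intros Hl. rewrite <- (prodn_one n). apply VPg. intros i Hi.
  split; [intros; apply Rlt_le, Ri_pos; auto| apply Ri_sum; auto].
Qed.

Lemma prodW_nonneg (w : nat -> X -> Y -> R) k xs ys :
  (forall i a b, (k <= i < k + length xs)%nat -> 0 <= w i a b) -> 0 <= prodW w k xs ys.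
Proof.
  revert k ys; induction xs; intros k [|y ys] H; simpl; try lra.
  apply Rmult_le_pos; [apply H; simpl; lia| apply IHxs; intros; apply H; simpl; lia].
Qed.

Lemma Wn_nonneg x y : 0 <= Wch x y.
Proof.
  unfold Wch, prodCh. apply prodW_nonneg. intros i a b Hi. rewrite vec_len in Hi.
  apply (HW i ltac:(lia)).
Qed.

Lemma Wn_sum x : has_sum (Wch x) 1.
Proof.
  unfold Wch, prodCh.
  apply (has_sum_ext (fun y : vec Y n => prodL (genX W 0 (proj1_sig x)) (proj1_sig y))).
  { intros y; rewrite prodW_genX; auto. }
  replace 1 with (prodS (genX W 0 (proj1_sig x))).
  - apply VP; [rewrite genX_len, vec_len; auto|].
    intros h Hh. apply genX_in in Hh. destruct Hh as [i [a [Hi ->]]]. rewrite vec_len in Hi.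
    destruct (HW i ltac:(lia) a) as [H1 H2]. split; auto. exists 1; auto.
  - rewrite prodS_genX. rewrite (prodi_ext _ (fun _ _ => 1)).
    + rewrite prodi_const. apply prodn_one.
    + intros i a Hi. rewrite vec_len in Hi. apply Sum_eq. apply (HW i ltac:(lia)).
Qed.

Lemma ratio_in_I lam x : 0 <= lam <= 1 ->
  inI (xi1 n PX QX lam) (xi2 n PX QX lam) (RXl lam x / QXp x).
Proof.
  intros Hl. unfold RXl, QXp, prodP.
  rewrite prodi_div by (intros i a Hi; rewrite vec_len in Hi; apply (HQ i ltac:(lia))).
  assert (Hf : forall i a, (i < n)%nat -> Ri lam i a / QX i a = lam * (PX i a / QX i a) + (1 - lam)).
  { intros i a Hi. unfold Ri. destruct (HQ i Hi) as [Q1 _]. specialize (Q1 a). field. lra. }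
  split; [|split].
  - apply prodi_pos. intros i a Hi. rewrite vec_len in Hi. apply Rdiv_lt_0_compat.
    + apply Ri_pos; auto; lia.
    + apply (HQ i ltac:(lia)).
  - unfold xi1. change (prodn n (fun i => 1 - lam + lam * Inf (ratio_set (PX i) (QX i)))) with (prodn n (fun i => 1 - lam + lam * mi i)).
    replace (prodn n (fun i => 1 - lam + lam * mi i)) with (prodi (fun i (_ : X) => 1 - lam + lam * mi i) 0 (proj1_sig x)).
    + apply prodi_le. intros i a Hi. rewrite vec_len in Hi. rewrite Hf by lia.
      destruct (mi_bounds i ltac:(lia)) as [M1 [M2 M3]]. specialize (M2 a). nra.
    + rewrite prodi_const, vec_len. apply prodn_ext; auto.
  - destruct (xi2 n PX QX lam) as [w|] eqn:E; auto.
    unfold xi2 in E. apply oprodn_some in E. destruct E as [u [Hu ->]].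
    replace (prodn n u) with (prodi (fun i (_ : X) => u i) 0 (proj1_sig x)).
    + apply prodi_le. intros i a Hi. rewrite vec_len in Hi. simpl in Hi. rewrite Hf by lia.
      specialize (Hu i ltac:(lia)).
      pose proof (ratio_pos i a ltac:(lia)).
      destruct (Sup (ratio_set (PX i) (QX i))) as [s|] eqn:Es.
      * injection Hu as <-. destruct (sup_bounds i s ltac:(lia) Es) as [S1 _]. specialize (S1 a). nra.
      * destruct (Req_dec_T lam 0) as [->|]; [injection Hu as <-; lra| discriminate].
    + rewrite prodi_const, vec_len. apply prodn_ext; auto.
Qed.

Lemma push_prod (r : nat -> X -> R) y :
  (forall i, (i < n)%nat -> (forall a, 0 <= r i a) /\ has_sum (r i) 1) ->
  push (prodP n r) Wch y = prodP n (fun i => push (r i) (W i)) y.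
Proof.
  intros Hr. unfold push at 1. apply Sum_eq.
  apply (has_sum_ext (fun x : vec X n => prodL (genY r W 0 (proj1_sig y)) (proj1_sig x))).
  { intros x. unfold prodP, Wch, prodCh. rewrite prodiW_genY; auto. rewrite !vec_len; auto. }
  unfold prodP. replace (prodi (fun i => push (r i) (W i)) 0 (proj1_sig y)) with (prodS (genY r W 0 (proj1_sig y))) by (rewrite prodS_genY; reflexivity).
  apply VP; [rewrite genY_len, vec_len; auto|].
  intros h Hh. apply genY_in in Hh. destruct Hh as [i [b [Hi ->]]]. rewrite vec_len in Hi.
  destruct (Hr i ltac:(lia)) as [H1 H2].
  assert (W1 : forall a b, 0 <= W i a b) by (intros a; apply (HW i ltac:(lia) a)).
  assert (W2 : forall a, has_sum (W i a) 1) by (intros a; apply (HW i ltac:(lia) a)).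
  split; [intros; apply Rmult_le_pos; [apply H1| apply W1]|].
  apply (dominated_summable _ (r i) 1); auto. intros a.
  rewrite Rabs_pos_eq by (apply Rmult_le_pos; auto).
  pose proof (has_sum_term (W i a) 1 b (W1 a) (W2 a)). specialize (H1 a). specialize (W1 a b). nra.
Qed.


Section PerI.
Variable i : nat.
Hypothesis Hi : (i < n)%nat.

Let W1 : forall a b, 0 <= W i a b.
Proof. intros a; apply (HW i Hi a). Qed.
Let W2 : forall a, has_sum (W i a) 1.
Proof. intros a; apply (HW i Hi a). Qed.
Let Q0 : forall a, 0 < QX i a.
Proof. apply (HQ i Hi). Qed.
Let Q1 : has_sum (QX i) 1.
Proof. apply (HQ i Hi). Qed.
Let P0 : forall a, 0 < PX i a.
Proof. apply (HP i Hi). Qed.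
Let P1 : has_sum (PX i) 1.
Proof. apply (HP i Hi). Qed.

Lemma PY_zero y : push (QX i) (W i) y = 0 -> push (PX i) (W i) y = 0.
Proof. apply (push_zero (QX i) (PX i) (W i)); auto. intros; apply Rlt_le; auto. Qed.

Lemma chiY : summable (chi2_term (PX i) (QX i)) ->
  has_sum (chi2_term (push (PX i) (W i)) (push (QX i) (W i))) (chi2 (push (PX i) (W i)) (push (QX i) (W i)))
  /\ 0 <= chi2 (push (PX i) (W i)) (push (QX i) (W i)) <= chi2 (PX i) (QX i).
Proof.
  intros Hs.
  destruct (DP (QX i) (PX i) (W i) 0 None Q0 (fun a => Rlt_le _ _ (P0 a)) Q1 P1 W1 W2
     (fun a => conj (Rdiv_lt_0_compat _ _ (P0 a) (Q0 a)) (conj (Rlt_le _ _ (Rdiv_lt_0_compat _ _ (P0 a) (Q0 a))) I))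
     (fun t => (t - 1) ^ 2) (fun m => 2 * (m - 1)) (chi2 (PX i) (QX i))) as [Sy [HSy HSyle]].
  - intros; cbv beta; apply pow2_ge_0.
  - intros m t _ _; cbv beta; pose proof (pow2_ge_0 (t - m)); nra.
  - apply (has_sum_ext (chi2_term (PX i) (QX i))); [|apply summable_Sum; auto].
    intros a. unfold chi2_term. destruct (Req_dec_T (QX i a) 0) as [E|E]; [specialize (Q0 a); lra|].
    field; auto.
  - assert (HC : has_sum (chi2_term (push (PX i) (W i)) (push (QX i) (W i))) Sy).
    { eapply has_sum_ext; [|exact HSy]. intros y. unfold Df_term, chi2_term.
      destruct (Req_dec_T (push (QX i) (W i) y) 0); [auto| field; auto]. }
    assert (Ec : chi2 (push (PX i) (W i)) (push (QX i) (W i)) = Sy) by (unfold chi2; apply Sum_eq; auto).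
    rewrite Ec. split; auto. split; auto.
    apply (has_sum_nonneg (chi2_term (push (PX i) (W i)) (push (QX i) (W i)))); auto.
    intros y. unfold chi2_term. destruct (Req_dec_T (push (QX i) (W i) y) 0) as [E|E]; [lra|].
    pose proof (push_nonneg (W i) W1 W2 (QX i) y (fun a => Rlt_le _ _ (Q0 a)) Q1).
    apply Rmult_le_pos; [apply pow2_ge_0| apply Rlt_le, Rinv_0_lt_compat; lra].
Qed.

Lemma RYi_lin lam y : push (Ri lam i) (W i) y = lam * push (PX i) (W i) y + (1 - lam) * push (QX i) (W i) y.
Proof.
  unfold push at 1. apply Sum_eq.
  apply (has_sum_ext (fun a => lam * (PX i a * W i a y) + (1 - lam) * (QX i a * W i a y))).
  { intros a; unfold Ri; ring. }
  apply has_sum_lin; apply push_has; auto; intros; apply Rlt_le; auto.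
Qed.

Lemma sqXi lam : summable (chi2_term (PX i) (QX i)) ->
  has_sum (fun a => Ri lam i a ^ 2 / QX i a) (1 + lam ^ 2 * chi2 (PX i) (QX i)).
Proof.
  intros Hs.
  apply (has_sum_ext (fun a => lam ^ 2 * chi2_term (PX i) (QX i) a + (2 * Ri lam i a - QX i a))).
  { intros a. unfold chi2_term, Ri. destruct (Req_dec_T (QX i a) 0) as [E|E]; [specialize (Q0 a); lra|]. field; auto. }
  replace (1 + lam ^ 2 * chi2 (PX i) (QX i)) with (lam ^ 2 * chi2 (PX i) (QX i) + (2 * 1 - 1)) by ring.
  apply has_sum_plus; [apply has_sum_scal; apply summable_Sum; auto|].
  apply has_sum_minus; [apply has_sum_scal; apply Ri_sum; auto| auto].
Qed.

Lemma sqYi lam : 0 <= lam <= 1 -> summable (chi2_term (PX i) (QX i)) ->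
  has_sum (fun y => if Req_dec_T (push (QX i) (W i) y) 0 then 0
                    else push (Ri lam i) (W i) y ^ 2 / push (QX i) (W i) y)
          (1 + lam ^ 2 * chi2 (push (PX i) (W i)) (push (QX i) (W i))).
Proof.
  intros Hl Hs. destruct (chiY Hs) as [HC _].
  assert (HR1 : has_sum (push (Ri lam i) (W i)) 1).
  { apply push_sum1; auto. intros; apply Rlt_le, Ri_pos; auto. apply Ri_sum; auto. }
  assert (HQ1 : has_sum (push (QX i) (W i)) 1) by (apply push_sum1; auto; intros; apply Rlt_le; auto).
  apply (has_sum_ext (fun y => lam ^ 2 * chi2_term (push (PX i) (W i)) (push (QX i) (W i)) y
                              + (2 * push (Ri lam i) (W i) y - push (QX i) (W i) y))).
  { intros y. unfold chi2_term. rewrite RYi_lin.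
    destruct (Req_dec_T (push (QX i) (W i) y) 0) as [E|E].
    - rewrite (PY_zero y E), E. ring.
    - field; auto. }
  replace (1 + lam ^ 2 * chi2 (push (PX i) (W i)) (push (QX i) (W i)))
    with (lam ^ 2 * chi2 (push (PX i) (W i)) (push (QX i) (W i)) + (2 * 1 - 1)) by ring.
  apply has_sum_plus; [apply has_sum_scal; auto|].
  apply has_sum_minus; [apply has_sum_scal|]; auto.
Qed.

End PerI.

Lemma Sx2_sum lam : 0 <= lam <= 1 -> (forall i, (i < n)%nat -> summable (chi2_term (PX i) (QX i))) ->
  has_sum (fun x => RXl lam x ^ 2 / QXp x) (prodn n (fun i => 1 + lam ^ 2 * chi2 (PX i) (QX i))).
Proof.
  intros Hl Hs.
  apply (has_sum_ext (fun x : vec X n => prodi (fun i a => Ri lam i a ^ 2 / QX i a) 0 (proj1_sig x))).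
  { intros x. unfold RXl, QXp, prodP. rewrite prodi_sq; auto.
    intros i a Hi; rewrite vec_len in Hi; apply (HQ i ltac:(lia)). }
  apply VPg. intros i Hi. split.
  - intros a. apply Rmult_le_pos; [apply pow2_ge_0| apply Rlt_le, Rinv_0_lt_compat; apply (HQ i Hi)].
  - apply sqXi; auto.
Qed.

Lemma Sy2_sum lam : 0 <= lam <= 1 -> (forall i, (i < n)%nat -> summable (chi2_term (PX i) (QX i))) ->
  has_sum (sq (push (RXl lam) Wch) (push QXp Wch))
    (prodn n (fun i => 1 + lam ^ 2 * chi2 (push (PX i) (W i)) (push (QX i) (W i)))).
Proof.
  intros Hl Hs.
  apply (has_sum_ext (fun y : vec Y n => prodi (fun i b => if Req_dec_T (push (QX i) (W i) b) 0 then 0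
                    else push (Ri lam i) (W i) b ^ 2 / push (QX i) (W i) b) 0 (proj1_sig y))).
  { intros y. unfold sq. unfold RXl, QXp.
    rewrite (push_prod (Ri lam)), (push_prod QX).
    - unfold prodP. rewrite sq_prodi. auto.
    - intros i Hi. destruct (HQ i Hi) as [H1 H2]. split; auto. intros; apply Rlt_le; auto.
    - intros i Hi. split; [intros; apply Rlt_le, Ri_pos; auto| apply Ri_sum; auto]. }
  apply VPg. intros i Hi. split.
  - intros b. destruct (Req_dec_T (push (QX i) (W i) b) 0); [lra|].
    assert (0 <= push (QX i) (W i) b).
    { apply push_nonneg; try apply (HW i Hi). intros; apply Rlt_le; apply (HQ i Hi). apply (HQ i Hi). }
    apply Rmult_le_pos; [apply pow2_ge_0| apply Rlt_le, Rinv_0_lt_compat; lra].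
  - apply sqYi; auto.
Qed.

Lemma gap_core lam kap sig : 0 <= lam <= 1 ->
  (forall i, (i < n)%nat -> summable (chi2_term (PX i) (QX i))) ->
  summable (Df_term f (RXl lam) QXp) ->
  (sig = 1 \/ sig = -1) ->
  (forall t, inI (xi1 n PX QX lam) (xi2 n PX QX lam) t -> 0 <= sig * (f2 t - 2 * kap)) ->
  0 <= sig * ((Df f (RXl lam) QXp - Df f (push (RXl lam) Wch) (push QXp Wch))
       - kap * (prodn n (fun i => 1 + lam ^ 2 * chi2 (PX i) (QX i))
                - prodn n (fun i => 1 + lam ^ 2 * chi2 (push (PX i) (W i)) (push (QX i) (W i))))).
Proof.
  intros Hl Hs HD Hsig Hpos.
  apply (GL QXp (RXl lam) Wch (xi1 n PX QX lam) (xi2 n PX QX lam)) with (f1 := f1) (f2 := f2) (kap := kap) (sig := sig).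
  - apply QXn_pos.
  - intros; apply Rlt_le, RX_pos; auto.
  - apply QXn_sum.
  - apply RX_sum; auto.
  - apply Wn_nonneg.
  - apply Wn_sum.
  - intros; apply ratio_in_I; auto.
  - exact Hf1.
  - exact Hf2.
  - exact Hsig.
  - exact Hpos.
  - apply one_in_I; auto.
  - unfold Df. apply summable_Sum; auto.
  - apply Sx2_sum; auto.
  - apply Sy2_sum; auto.
Qed.

Lemma f2vals_ne lam : 0 <= lam <= 1 -> exists v, f2_values f2 (xi1 n PX QX lam) (xi2 n PX QX lam) v.
Proof. intros Hl. exists (f2 1), 1. split; auto. apply one_in_I; auto. Qed.

Lemma c_props lam : 0 <= lam <= 1 ->
  0 <= c_f f2 (xi1 n PX QX lam) (xi2 n PX QX lam) /\
  (forall t, inI (xi1 n PX QX lam) (xi2 n PX QX lam) t -> c_f f2 (xi1 n PX QX lam) (xi2 n PX QX lam) <= f2 t / 2).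
Proof.
  intros Hl. unfold c_f.
  destruct (Inf_glb (f2_values f2 (xi1 n PX QX lam) (xi2 n PX QX lam)) (f2vals_ne lam Hl)) as [H1 H2].
  { exists 0. intros v [t [Ht ->]]. apply (f2_nonneg f f1 f2); auto. apply Ht. }
  split.
  - assert (0 <= Inf (f2_values f2 (xi1 n PX QX lam) (xi2 n PX QX lam))).
    { apply H2. intros v [t [Ht ->]]. apply (f2_nonneg f f1 f2); auto. apply Ht. }
    lra.
  - intros t Ht. assert (Inf (f2_values f2 (xi1 n PX QX lam) (xi2 n PX QX lam)) <= f2 t) by (apply H1; exists t; auto).
    lra.
Qed.

Lemma e_props lam ef : 0 <= lam <= 1 ->
  e_f f2 (xi1 n PX QX lam) (xi2 n PX QX lam) = Some ef ->
  forall t, inI (xi1 n PX QX lam) (xi2 n PX QX lam) t -> f2 t / 2 <= ef.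
Proof.
  intros Hl He t Ht. unfold e_f in He.
  destruct (Sup (f2_values f2 (xi1 n PX QX lam) (xi2 n PX QX lam))) as [s|] eqn:Es; [|discriminate].
  injection He as <-. destruct (Sup_some _ _ (f2vals_ne lam Hl) Es) as [H1 _].
  assert (f2 t <= s) by (apply H1; exists t; auto). lra.
Qed.

End Main.

Lemma prod_ineq n (a b : nat -> R) x : (forall i, (i < n)%nat -> 0 <= b i <= a i) -> 0 <= x ->
  x * sumn n (fun i => a i - b i) <= prodn n (fun i => 1 + x * a i) - prodn n (fun i => 1 + x * b i)
  /\ 0 <= x * sumn n (fun i => a i - b i).
Proof.
  intros H Hx. induction n; simpl.
  - lra.
  - destruct IHn as [I1 I2]; [intros; apply H; lia|].
    assert (Hn := H n ltac:(lia)).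
    assert (1 <= prodn n (fun i => 1 + x * b i)) by (apply prodn_ge1; intros i Hi; specialize (H i ltac:(lia)); nra).
    set (Pa := prodn n (fun i => 1 + x * a i)) in *. set (Pb := prodn n (fun i => 1 + x * b i)) in *.
    set (s := sumn n (fun i => a i - b i)) in *.
    split; [|nra].
    assert (0 <= x * a n) by nra.
    assert (Pa * (1 + x * a n) - Pb * (1 + x * b n) = (Pa - Pb) * (1 + x * a n) + Pb * (x * (a n - b n))) by ring.
    assert ((Pa - Pb) * (1 + x * a n) >= (Pa - Pb)) by nra.
    assert (0 <= x * (a n - b n)) by (apply Rmult_le_pos; lra).
    assert (Pb * (x * (a n - b n)) >= x * (a n - b n)) by nra.
    nra.
Qed.

Section AB.
Context (X Y : Type) (n : nat) (PX QX : nat -> X -> R) (W : nat -> X -> Y -> R) (f f1 f2 : R -> R).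
Hypothesis HP : forall i, (i < n)%nat -> pmf_full (PX i).
Hypothesis HQ : forall i, (i < n)%nat -> pmf_full (QX i).
Hypothesis HW : forall i, (i < n)%nat -> stochastic (W i).
Hypothesis Hconv : convex_pos f.
Hypothesis Hf1 : forall t, 0 < t -> derivable_pt_lim f t (f1 t).
Hypothesis Hf2 : forall t, 0 < t -> derivable_pt_lim f1 t (f2 t).

Definition gapf (lam : R) : R :=
  Df f (prodP n (fun i x => lam * PX i x + (1 - lam) * QX i x)) (prodP n QX) -
  Df f (push (prodP n (fun i x => lam * PX i x + (1 - lam) * QX i x)) (prodCh n W))
       (push (prodP n QX) (prodCh n W)).
Definition Bf (lam : R) : R :=
  prodn n (fun i => 1 + lam ^ 2 * chi2 (PX i) (QX i))
  - prodn n (fun i => 1 + lam ^ 2 * chi2 (push (PX i) (W i)) (push (QX i) (W i))).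
Definition Sf : R := sumn n (fun i => chi2 (PX i) (QX i) - chi2 (push (PX i) (W i)) (push (QX i) (W i))).

Lemma partA lam : 0 <= lam <= 1 ->
  (forall i, (i < n)%nat -> summable (chi2_term (PX i) (QX i))) ->
  summable (Df_term f (prodP n (fun i x => lam * PX i x + (1 - lam) * QX i x)) (prodP n QX)) ->
  gapf lam >= c_f f2 (xi1 n PX QX lam) (xi2 n PX QX lam) * Bf lam /\
  c_f f2 (xi1 n PX QX lam) (xi2 n PX QX lam) * Bf lam >= c_f f2 (xi1 n PX QX lam) (xi2 n PX QX lam) * lam ^ 2 * Sf /\
  c_f f2 (xi1 n PX QX lam) (xi2 n PX QX lam) * lam ^ 2 * Sf >= 0.
Proof.
  intros Hl Hs HD.
  set (c := c_f f2 (xi1 n PX QX lam) (xi2 n PX QX lam)).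
  destruct (c_props X n PX QX f f1 f2 HP HQ Hconv Hf1 Hf2 lam Hl) as [Hc0 Hc].
  fold c in Hc0, Hc.
  pose proof (gap_core X Y n PX QX W f f1 f2 HP HQ HW Hf1 Hf2 lam c 1 Hl Hs HD (or_introl eq_refl)) as G.
  assert (Hpos : forall t, inI (xi1 n PX QX lam) (xi2 n PX QX lam) t -> 0 <= 1 * (f2 t - 2 * c)).
  { intros t Ht. specialize (Hc t Ht). lra. }
  specialize (G Hpos). unfold RXl, QXp, Wch, Ri in G.
  fold (gapf lam) in G. fold (Bf lam) in G.
  destruct (prod_ineq n (fun i => chi2 (PX i) (QX i)) (fun i => chi2 (push (PX i) (W i)) (push (QX i) (W i))) (lam ^ 2))
    as [I1 I2].
  { intros i Hi. destruct (chiY X Y n PX QX W HP HQ HW i Hi (Hs i Hi)) as [_ [J1 J2]]. split; auto. }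
  { apply pow2_ge_0. }
  fold Sf in I1, I2. fold (Bf lam) in I1.
  split; [lra|]. split.
  - assert (c * (lam ^ 2 * Sf) <= c * Bf lam) by (apply Rmult_le_compat_l; auto). rewrite Rmult_assoc. lra.
  - rewrite Rmult_assoc. apply Rle_ge, Rmult_le_pos; auto.
Qed.

Lemma partB lam : 0 <= lam <= 1 ->
  (forall i, (i < n)%nat -> summable (chi2_term (PX i) (QX i))) ->
  summable (Df_term f (prodP n (fun i x => lam * PX i x + (1 - lam) * QX i x)) (prodP n QX)) ->
  forall ef, e_f f2 (xi1 n PX QX lam) (xi2 n PX QX lam) = Some ef -> gapf lam <= ef * Bf lam.
Proof.
  intros Hl Hs HD ef He.
  pose proof (gap_core X Y n PX QX W f f1 f2 HP HQ HW Hf1 Hf2 lam ef (-1) Hl Hs HD (or_intror eq_refl)) as G.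
  assert (Hpos : forall t, inI (xi1 n PX QX lam) (xi2 n PX QX lam) t -> 0 <= -1 * (f2 t - 2 * ef)).
  { intros t Ht. pose proof (e_props X n PX QX f2 HP HQ lam ef Hl He t Ht). lra. }
  specialize (G Hpos). unfold RXl, QXp, Wch, Ri in G.
  fold (gapf lam) in G. fold (Bf lam) in G. lra.
Qed.

End AB.

Lemma cont_lin a b x0 : continuity_pt (fun x => a + x * b) x0.
Proof.
  apply (continuity_pt_plus (fun _ => a) (fun x => x * b)).
  - apply continuity_pt_const. intros u v; auto.
  - apply (continuity_pt_mult (fun x => x) (fun _ => b)).
    + apply derivable_continuous_pt, derivable_pt_id.
    + apply continuity_pt_const. intros u v; auto.
Qed.

Lemma cont_prodn n (d : nat -> R) : continuity_pt (fun l => prodn n (fun i => 1 + l * d i)) 0.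
Proof.
  induction n.
  - apply continuity_pt_const. intros u v; auto.
  - apply (continuity_pt_mult (fun l => prodn n (fun i => 1 + l * d i)) (fun l => 1 + l * d n)); auto.
    apply cont_lin.
Qed.

Lemma cont_eps (g : R -> R) x0 : continuity_pt g x0 -> forall eps, 0 < eps -> exists del, 0 < del /\
   forall x, Rabs (x - x0) < del -> Rabs (g x - g x0) < eps.
Proof.
  intros H eps He. destruct (H eps He) as [alp [Ha Hx]]. exists alp; split; auto.
  intros x Hxa. destruct (Req_dec x x0) as [->|Hne].
  - replace (g x0 - g x0) with 0 by ring. rewrite Rabs_R0; auto.
  - apply (Hx x). unfold D_x, no_cond. split; [split; [exact I| auto]| exact Hxa].
Qed.

Lemma prodn_lin_lim n (d : nat -> R) eps : 0 < eps -> exists del, 0 < del /\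
  forall l, Rabs l < del -> Rabs (prodn n (fun i => 1 + l * d i) - 1) < eps.
Proof.
  intros He. destruct (cont_eps _ _ (cont_prodn n d) eps He) as [del [Hd H]].
  exists del; split; auto. intros l Hl. specialize (H l). rewrite Rminus_0_r in H.
  replace (prodn n (fun i => 1 + 0 * d i)) with 1 in H; [apply H; auto|].
  rewrite <- (prodn_one n) at 1. apply prodn_ext; intros; ring.
Qed.

Fixpoint Qp (m : nat) (a : nat -> R) (x : R) : R :=
  match m with O => 0 | S k => Qp k a x * (1 + x * a k) + a k end.

Lemma Qp_id m a x : prodn m (fun i => 1 + x * a i) - 1 = x * Qp m a x.
Proof.
  induction m; simpl; [ring|].
  replace (prodn m (fun i => 1 + x * a i) * (1 + x * a m) - 1)
    with ((prodn m (fun i => 1 + x * a i) - 1) * (1 + x * a m) + x * a m) by ring.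
  rewrite IHm; ring.
Qed.

Lemma Qp_0 m a : Qp m a 0 = sumn m a.
Proof. induction m; simpl; auto. rewrite IHm; ring. Qed.

Lemma cont_Qp m a x0 : continuity_pt (Qp m a) x0.
Proof.
  induction m.
  - apply continuity_pt_const. intros u v; auto.
  - change (continuity_pt (fun x => Qp m a x * (1 + x * a m) + a m) x0).
    apply (continuity_pt_plus (fun x => Qp m a x * (1 + x * a m)) (fun _ => a m)).
    + apply (continuity_pt_mult (Qp m a) (fun x => 1 + x * a m)); auto. apply cont_lin.
    + apply continuity_pt_const. intros u v; auto.
Qed.

Lemma sumn_minus m (a b : nat -> R) : sumn m (fun i => a i - b i) = sumn m a - sumn m b.
Proof. induction m; simpl; [ring| rewrite IHm; ring]. Qed.

Lemma B_lim n (a b : nat -> R) eps : 0 < eps -> exists del, 0 < del /\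
  forall l, 0 < Rabs l < del ->
  Rabs ((prodn n (fun i => 1 + l ^ 2 * a i) - prodn n (fun i => 1 + l ^ 2 * b i)) / l ^ 2
        - sumn n (fun i => a i - b i)) < eps.
Proof.
  intros He.
  destruct (cont_eps _ _ (cont_Qp n a 0) (eps / 2) ltac:(lra)) as [da [Hda Ha]].
  destruct (cont_eps _ _ (cont_Qp n b 0) (eps / 2) ltac:(lra)) as [db [Hdb Hb]].
  exists (Rmin 1 (Rmin da db)); split.
  { apply Rmin_glb_lt; [lra| apply Rmin_glb_lt; auto]. }
  intros l [Hl0 Hl].
  assert (Hl1 : Rabs l < 1) by (eapply Rlt_le_trans; [exact Hl| apply Rmin_l]).
  assert (Hl2 : Rabs l < Rmin da db) by (eapply Rlt_le_trans; [exact Hl| apply Rmin_r]).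
  assert (Hsq : Rabs (l ^ 2 - 0) <= Rabs l).
  { rewrite Rminus_0_r. rewrite <- RPow_abs. simpl. rewrite Rmult_1_r.
    pose proof (Rabs_pos l). nra. }
  specialize (Ha (l ^ 2) ltac:(pose proof (Rmin_l da db); lra)).
  specialize (Hb (l ^ 2) ltac:(pose proof (Rmin_r da db); lra)).
  rewrite Qp_0 in Ha, Hb.
  assert (Hl0' : l <> 0) by (intro E; rewrite E, Rabs_R0 in Hl0; lra).
  replace ((prodn n (fun i => 1 + l ^ 2 * a i) - prodn n (fun i => 1 + l ^ 2 * b i)) / l ^ 2)
    with (Qp n a (l ^ 2) - Qp n b (l ^ 2)).
  - rewrite sumn_minus.
    replace (Qp n a (l ^ 2) - Qp n b (l ^ 2) - (sumn n a - sumn n b))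
      with ((Qp n a (l ^ 2) - sumn n a) - (Qp n b (l ^ 2) - sumn n b)) by ring.
    eapply Rle_lt_trans; [apply Rabs_triang|]. rewrite Rabs_Ropp. lra.
  - replace (prodn n (fun i => 1 + l ^ 2 * a i) - prodn n (fun i => 1 + l ^ 2 * b i))
      with ((prodn n (fun i => 1 + l ^ 2 * a i) - 1) - (prodn n (fun i => 1 + l ^ 2 * b i) - 1)) by ring.
    rewrite !Qp_id. field; auto.
Qed.

Lemma prod_close U V eps : 0 < eps -> exists eta, 0 < eta /\
  forall u v, Rabs (u - U) < eta -> Rabs (v - V) < eta -> Rabs (u * v - U * V) < eps.
Proof.
  intros He. set (K := Rabs U + Rabs V + 1).
  assert (HK : 0 < K) by (unfold K; pose proof (Rabs_pos U); pose proof (Rabs_pos V); lra).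
  exists (Rmin 1 (eps / K)); split.
  { apply Rmin_glb_lt; [lra| apply Rdiv_lt_0_compat; auto]. }
  intros u v Hu Hv.
  assert (E1 : Rmin 1 (eps / K) <= 1) by apply Rmin_l.
  assert (E2 : Rmin 1 (eps / K) <= eps / K) by apply Rmin_r.
  set (eta := Rmin 1 (eps / K)) in *.
  assert (Hu' : Rabs u < Rabs U + 1).
  { replace u with (U + (u - U)) by ring. eapply Rle_lt_trans; [apply Rabs_triang|]. lra. }
  replace (u * v - U * V) with (u * (v - V) + V * (u - U)) by ring.
  eapply Rle_lt_trans; [apply Rabs_triang|]. rewrite !Rabs_mult.
  pose proof (Rabs_pos u). pose proof (Rabs_pos V). pose proof (Rabs_pos (v - V)). pose proof (Rabs_pos (u - U)).
  assert (Rabs u * Rabs (v - V) <= (Rabs U + 1) * eta) by (apply Rmult_le_compat; lra).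
  assert (Rabs V * Rabs (u - U) <= Rabs V * eta) by (apply Rmult_le_compat_l; lra).
  assert (eta * K <= eps).
  { apply (Rmult_le_compat_r K) in E2; [|lra]. unfold Rdiv in E2. rewrite Rmult_assoc, Rinv_l in E2; lra. }
  assert (Rabs V * Rabs (u - U) < Rabs V * eta \/ Rabs u * Rabs (v - V) < (Rabs U + 1) * eta).
  { destruct (Req_dec (Rabs u) 0) as [Z|Z].
    - destruct (Req_dec (Rabs V) 0) as [Z2|Z2]; [|left; apply Rmult_lt_compat_l; lra].
      right. rewrite Z. assert (0 < eta) by (pose proof (Rabs_pos (u - U)); lra).
      pose proof (Rabs_pos U). rewrite Rmult_0_l. apply Rmult_lt_0_compat; lra.
    - right. apply (Rle_lt_trans _ (Rabs u * eta)).
      + apply Rmult_le_compat_l; lra.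
      + apply Rmult_lt_compat_r; [pose proof (Rabs_pos (u - U)); lra| lra]. }
  unfold K in *. destruct H5; lra.
Qed.

Lemma prodn_pos n (a : nat -> R) : (forall i, (i < n)%nat -> 0 < a i) -> 0 < prodn n a.
Proof. induction n; simpl; intros H; [lra|]. apply Rmult_lt_0_compat; [apply IHn; auto| apply H; lia]. Qed.

Section C.
Context (X Y : Type) (n : nat) (PX QX : nat -> X -> R) (W : nat -> X -> Y -> R) (f f1 f2 : R -> R).
Hypothesis HP : forall i, (i < n)%nat -> pmf_full (PX i).
Hypothesis HQ : forall i, (i < n)%nat -> pmf_full (QX i).
Hypothesis HW : forall i, (i < n)%nat -> stochastic (W i).
Hypothesis Hconv : convex_pos f.
Hypothesis Hf1 : forall t, 0 < t -> derivable_pt_lim f t (f1 t).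
Hypothesis Hf2 : forall t, 0 < t -> derivable_pt_lim f1 t (f2 t).
Hypothesis Hc2 : continuity_pt f2 1.
Hypothesis Hsup : forall i, (i < n)%nat -> Sup (ratio_set (PX i) (QX i)) <> None.

Definition sv (i : nat) : R := match Sup (ratio_set (PX i) (QX i)) with Some s => s | None => 1 end.

Lemma sv_spec i : (i < n)%nat -> Sup (ratio_set (PX i) (QX i)) = Some (sv i).
Proof. intros Hi. unfold sv. destruct (Sup (ratio_set (PX i) (QX i))) eqn:E; auto. exfalso; apply (Hsup i Hi E). Qed.

Lemma xi2_some lam : xi2 n PX QX lam = Some (prodn n (fun i => 1 - lam + lam * sv i)).
Proof. unfold xi2. apply oprodn_all. intros i Hi. rewrite (sv_spec i Hi). auto. Qed.

Lemma xi1_pos lam : 0 <= lam < 1 -> 0 < xi1 n PX QX lam.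
Proof.
  intros Hl. unfold xi1. apply prodn_pos. intros i Hi.
  destruct (mi_bounds X n PX QX HP HQ i Hi) as [M0 _]. unfold mi in M0. nra.
Qed.

Lemma chiX_summ i : (i < n)%nat -> summable (chi2_term (PX i) (QX i)).
Proof.
  intros Hi. destruct (sup_bounds X n PX QX HP HQ i (sv i) Hi (sv_spec i Hi)) as [S1 S2].
  destruct (HQ i Hi) as [Q0 Q1]. destruct (HP i Hi) as [P0 _].
  apply (dominated_summable _ (fun x => (sv i + 1) ^ 2 * QX i x) ((sv i + 1) ^ 2 * 1)).
  - intros x. unfold chi2_term. destruct (Req_dec_T (QX i x) 0) as [E|E]; [specialize (Q0 x); lra|].
    specialize (S1 x). specialize (Q0 x). specialize (P0 x).
    assert (Er : (PX i x - QX i x) ^ 2 / QX i x = QX i x * (PX i x / QX i x - 1) ^ 2) by (field; auto).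
    rewrite Er. set (r := PX i x / QX i x) in *.
    assert (0 < r) by (unfold r; apply Rdiv_lt_0_compat; auto).
    rewrite Rabs_pos_eq by (apply Rmult_le_pos; [lra| apply pow2_ge_0]).
    rewrite Rmult_comm. apply Rmult_le_compat_r; [lra|]. nra.
  - apply has_sum_scal; auto.
Qed.

Lemma f_bound lo hi : 0 < lo <= hi -> exists M, forall t, lo <= t <= hi -> Rabs (f t) <= M.
Proof.
  intros Hlh. exists (Rabs (f lo) + Rabs (f hi) + Rabs (f 1) + Rabs (f1 1) * (hi + 1)).
  intros t Ht.
  assert (Up : f t <= Rabs (f lo) + Rabs (f hi)).
  { destruct (Req_dec lo hi) as [E|E].
    - assert (Et : t = lo) by lra. rewrite Et. pose proof (Rle_abs (f lo)). pose proof (Rabs_pos (f hi)). lra.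
    - set (s := (t - lo) / (hi - lo)).
      assert (Hs : 0 <= s <= 1).
      { unfold s; split.
        - apply Rmult_le_pos; [lra| apply Rlt_le, Rinv_0_lt_compat; lra].
        - apply (Rmult_le_reg_r (hi - lo)); [lra|]. unfold Rdiv. rewrite Rmult_assoc, Rinv_l; lra. }
      pose proof (Hconv hi lo s ltac:(lra) ltac:(lra) Hs).
      replace (s * hi + (1 - s) * lo) with t in H by (unfold s; field; lra).
      pose proof (Rle_abs (f hi)). pose proof (Rle_abs (f lo)).
      pose proof (Rabs_pos (f hi)). pose proof (Rabs_pos (f lo)).
      assert (s * f hi <= s * Rabs (f hi)) by (apply Rmult_le_compat_l; lra).
      assert ((1 - s) * f lo <= (1 - s) * Rabs (f lo)) by (apply Rmult_le_compat_l; lra).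
      destruct Hs as [Hs0 Hs1].
      assert (0 <= (1 - s) * Rabs (f hi)) by (apply Rmult_le_pos; lra).
      assert (0 <= s * Rabs (f lo)) by (apply Rmult_le_pos; lra).
      lra. }
  assert (Lo : f 1 + f1 1 * (t - 1) <= f t) by (apply (conv_support f f1 1 t Hconv ltac:(lra) ltac:(lra) (Hf1 1 ltac:(lra)))).
  assert (- (Rabs (f1 1) * (hi + 1)) <= f1 1 * (t - 1)).
  { pose proof (Rabs_pos (f1 1)). destruct (Rle_dec 0 (f1 1)).
    - rewrite Rabs_pos_eq in * by auto. nra.
    - rewrite Rabs_left in * by lra. nra. }
  pose proof (Rle_abs (- f 1)). rewrite Rabs_Ropp in H0.
  apply Rabs_le. pose proof (Rabs_pos (f lo)). pose proof (Rabs_pos (f hi)). pose proof (Rabs_pos (f1 1)).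
  assert (0 <= Rabs (f1 1) * (hi + 1)) by (apply Rmult_le_pos; lra).
  pose proof (Rabs_pos (f 1)). split; lra.
Qed.

Lemma Df_summ lam : 0 <= lam < 1 ->
  summable (Df_term f (prodP n (fun i x => lam * PX i x + (1 - lam) * QX i x)) (prodP n QX)).
Proof.
  intros Hl.
  set (hi := prodn n (fun i => 1 - lam + lam * sv i)).
  assert (Hxi := xi1_pos lam Hl).
  assert (Hle : xi1 n PX QX lam <= hi).
  { pose proof (xi1_bounds X n PX QX HP HQ lam ltac:(lra)).
    pose proof (xi2_ge1 X n PX QX HP HQ lam hi ltac:(lra) (xi2_some lam)). lra. }
  destruct (f_bound (xi1 n PX QX lam) hi ltac:(lra)) as [M HM].
  apply (dominated_summable _ (fun x => M * prodP n QX x) (M * 1)).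
  - intros x. pose proof (ratio_in_I X n PX QX HP HQ lam x ltac:(lra)) as HI.
    rewrite xi2_some in HI. fold hi in HI. destruct HI as [H0 [H1 H2]].
    unfold RXl, QXp, Ri in H0, H1, H2.
    pose proof (QXn_pos X n QX HQ x) as Hq. unfold QXp in Hq.
    unfold Df_term. destruct (Req_dec_T (prodP n QX x) 0) as [E|E]; [lra|].
    rewrite Rabs_mult, Rabs_pos_eq by lra. rewrite Rmult_comm. apply Rmult_le_compat_r; [lra|].
    apply HM; split; auto.
  - apply has_sum_scal. apply (QXn_sum X n QX HQ).
Qed.

Definition cl lam := c_f f2 (xi1 n PX QX lam) (xi2 n PX QX lam).
Definition el lam := e_f f2 (xi1 n PX QX lam) (xi2 n PX QX lam).

Lemma near0 eta : 0 < eta -> exists del, 0 < del /\ forall lam, 0 < lam < del ->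
  lam < 1 /\ Rabs (cl lam - / 2 * f2 1) < eta /\
  (exists ef, el lam = Some ef /\ Rabs (ef - / 2 * f2 1) < eta) /\
  Rabs (Bf X Y n PX QX W lam / lam ^ 2 - Sf X Y n PX QX W) < eta.
Proof.
  intros He.
  destruct (cont_eps f2 1 Hc2 eta He) as [rho [Hrho Hf2c]].
  destruct (prodn_lin_lim n (fun i => mi X PX QX i - 1) rho Hrho) as [d1 [Hd1 H1]].
  destruct (prodn_lin_lim n (fun i => sv i - 1) rho Hrho) as [d2 [Hd2 H2]].
  destruct (B_lim n (fun i => chi2 (PX i) (QX i)) (fun i => chi2 (push (PX i) (W i)) (push (QX i) (W i))) eta He)
    as [d3 [Hd3 H3]].
  exists (Rmin (Rmin 1 d1) (Rmin d2 d3)). split.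
  { apply Rmin_glb_lt; apply Rmin_glb_lt; lra. }
  intros lam Hlam.
  assert (Hm1 := Rmin_l (Rmin 1 d1) (Rmin d2 d3)). assert (Hm2 := Rmin_r (Rmin 1 d1) (Rmin d2 d3)).
  assert (Hm3 := Rmin_l 1 d1). assert (Hm4 := Rmin_r 1 d1). assert (Hm5 := Rmin_l d2 d3). assert (Hm6 := Rmin_r d2 d3).
  assert (Hal : Rabs lam = lam) by (apply Rabs_pos_eq; lra).
  assert (Hl1 : lam < 1) by lra.
  assert (Hl : 0 <= lam <= 1) by lra.
  assert (Ex1 : Rabs (xi1 n PX QX lam - 1) < rho).
  { specialize (H1 lam ltac:(lra)). unfold xi1.
    replace (prodn n (fun i => 1 - lam + lam * Inf (ratio_set (PX i) (QX i))))
      with (prodn n (fun i => 1 + lam * (mi X PX QX i - 1))); auto.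
    apply prodn_ext; intros; unfold mi; ring. }
  set (hi := prodn n (fun i => 1 - lam + lam * sv i)).
  assert (Ex2 : Rabs (hi - 1) < rho).
  { specialize (H2 lam ltac:(lra)). unfold hi.
    replace (prodn n (fun i => 1 - lam + lam * sv i)) with (prodn n (fun i => 1 + lam * (sv i - 1))); auto.
    apply prodn_ext; intros; ring. }
  assert (Hint : forall t, inI (xi1 n PX QX lam) (xi2 n PX QX lam) t -> Rabs (f2 t - f2 1) < eta).
  { intros t [T0 [T1 T2]]. rewrite xi2_some in T2. fold hi in T2. apply Hf2c.
    apply Rabs_def2 in Ex1. apply Rabs_def2 in Ex2. apply Rabs_def1; lra. }
  assert (Hne := f2vals_ne X n PX QX f2 HP HQ lam Hl).
  assert (H1I := one_in_I X n PX QX HP HQ lam Hl).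
  split; [auto|]. split; [|split].
  - unfold cl, c_f.
    destruct (Inf_glb (f2_values f2 (xi1 n PX QX lam) (xi2 n PX QX lam)) Hne) as [G1 G2].
    { exists 0. intros v [t [Ht ->]]. apply (f2_nonneg f f1 f2); auto. apply Ht. }
    assert (A1 : Inf (f2_values f2 (xi1 n PX QX lam) (xi2 n PX QX lam)) <= f2 1) by (apply G1; exists 1; auto).
    assert (A2 : f2 1 - eta <= Inf (f2_values f2 (xi1 n PX QX lam) (xi2 n PX QX lam))).
    { apply G2. intros v [t [Ht ->]]. specialize (Hint t Ht). apply Rabs_def2 in Hint. lra. }
    apply Rabs_def1; lra.
  - unfold el, e_f.
    destruct (Sup_bound (f2_values f2 (xi1 n PX QX lam) (xi2 n PX QX lam)) Hne) as [s [Es [G1 G2]]].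
    { exists (f2 1 + eta). intros v [t [Ht ->]]. specialize (Hint t Ht). apply Rabs_def2 in Hint. lra. }
    rewrite Es. exists (/ 2 * s). split; auto.
    assert (A1 : f2 1 <= s) by (apply G1; exists 1; auto).
    assert (A2 : s <= f2 1 + eta).
    { apply G2. intros v [t [Ht ->]]. specialize (Hint t Ht). apply Rabs_def2 in Hint. lra. }
    apply Rabs_def1; lra.
  - unfold Bf, Sf. apply H3. rewrite Hal. lra.
Qed.

Lemma partC :
  lim0plus (fun lam => gapf X Y n PX QX W f lam / lam ^ 2) (/ 2 * f2 1 * Sf X Y n PX QX W) /\
  lim0plus (fun lam => cl lam * Bf X Y n PX QX W lam / lam ^ 2) (/ 2 * f2 1 * Sf X Y n PX QX W) /\
  lim0plus (fun lam => cl lam * lam ^ 2 * Sf X Y n PX QX W / lam ^ 2) (/ 2 * f2 1 * Sf X Y n PX QX W) /\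
  lim0plus_opt (fun lam => match el lam with
                           | Some ef => Some (ef * Bf X Y n PX QX W lam / lam ^ 2)
                           | None => None end) (/ 2 * f2 1 * Sf X Y n PX QX W).
Proof.
  set (S := Sf X Y n PX QX W). set (B := Bf X Y n PX QX W).
  assert (Main : forall eps, 0 < eps -> exists del, 0 < del /\ forall lam, 0 < lam < del ->
     lam < 1 /\ Rabs (cl lam * (B lam / lam ^ 2) - / 2 * f2 1 * S) < eps /\
     Rabs (cl lam * S - / 2 * f2 1 * S) < eps /\
     exists ef, el lam = Some ef /\ Rabs (ef * (B lam / lam ^ 2) - / 2 * f2 1 * S) < eps).
  { intros eps He. destruct (prod_close (/ 2 * f2 1) S eps He) as [eta [Heta Hpc]].
    destruct (near0 eta Heta) as [del [Hdel Hn]]. exists del; split; auto.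
    intros lam Hl. destruct (Hn lam Hl) as [L1 [L2 [[ef [E1 E2]] L4]]].
    split; auto. split; [apply Hpc; auto|]. split.
    - apply Hpc; auto. replace (S - S) with 0 by ring. rewrite Rabs_R0; auto.
    - exists ef; split; auto. }
  split; [|split; [|split]].
  - intros eps He. destruct (Main eps He) as [del [Hdel HM]]. exists del; split; auto.
    intros lam Hl. destruct (HM lam Hl) as [L1 [L2 [_ [ef [E1 E2]]]]].
    assert (Hl' : 0 <= lam <= 1) by lra.
    destruct (partA X Y n PX QX W f f1 f2 HP HQ HW Hconv Hf1 Hf2 lam Hl' chiX_summ (Df_summ lam ltac:(lra)))
      as [A1 _].
    pose proof (partB X Y n PX QX W f f1 f2 HP HQ HW Hf1 Hf2 lam Hl' chiX_summ (Df_summ lam ltac:(lra)) ef E1) as B1.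
    fold (cl lam) in A1. fold B in A1, B1. fold B.
    assert (Hp : 0 < lam ^ 2) by (apply pow_lt; lra).
    assert (U1 : cl lam * (B lam / lam ^ 2) <= gapf X Y n PX QX W f lam / lam ^ 2).
    { replace (cl lam * (B lam / lam ^ 2)) with ((cl lam * B lam) / lam ^ 2) by (field; lra).
      apply Rmult_le_compat_r; [apply Rlt_le, Rinv_0_lt_compat; auto| lra]. }
    assert (U2 : gapf X Y n PX QX W f lam / lam ^ 2 <= ef * (B lam / lam ^ 2)).
    { replace (ef * (B lam / lam ^ 2)) with ((ef * B lam) / lam ^ 2) by (field; lra).
      apply Rmult_le_compat_r; [apply Rlt_le, Rinv_0_lt_compat; auto| lra]. }
    apply Rabs_def2 in L2. apply Rabs_def2 in E2. apply Rabs_def1; lra.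
  - intros eps He. destruct (Main eps He) as [del [Hdel HM]]. exists del; split; auto.
    intros lam Hl. destruct (HM lam Hl) as [L1 [L2 _]].
    replace (cl lam * B lam / lam ^ 2) with (cl lam * (B lam / lam ^ 2)); auto.
    field; lra.
  - intros eps He. destruct (Main eps He) as [del [Hdel HM]]. exists del; split; auto.
    intros lam Hl. destruct (HM lam Hl) as [L1 [_ [L3 _]]].
    replace (cl lam * lam ^ 2 * S / lam ^ 2) with (cl lam * S); auto.
    field; lra.
  - intros eps He. destruct (Main eps He) as [del [Hdel HM]]. exists del; split; auto.
    intros lam Hl. destruct (HM lam Hl) as [L1 [_ [_ [ef [E1 E2]]]]].
    rewrite E1. exists (ef * B lam / lam ^ 2). split; auto.
    replace (ef * B lam / lam ^ 2) with (ef * (B lam / lam ^ 2)); auto.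
    field; lra.
Qed.

End C.

Theorem theorem2 (X Y : Type) (n : nat)
  (PX QX : nat -> X -> R) (W : nat -> X -> Y -> R) (f f1 f2 : R -> R)
  (HXc : countable X) (HYc : countable Y)
  (HP : forall i, (i < n)%nat -> pmf_full (PX i))
  (HQ : forall i, (i < n)%nat -> pmf_full (QX i))
  (HW : forall i, (i < n)%nat -> stochastic (W i))
  (Hconv : convex_pos f)
  (Hf1 : forall t, 0 < t -> derivable_pt_lim f t (f1 t))
  (Hf2 : forall t, 0 < t -> derivable_pt_lim f1 t (f2 t))
  (Hf0 : f 1 = 0) :
  let RX := fun lam : R => prodP n (fun i x => lam * PX i x + (1 - lam) * QX i x) in
  let QXn := prodP n QX in
  let Wn := prodCh n W in
  let RY := fun lam : R => push (RX lam) Wn in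
  let QY := push QXn Wn in
  let PYi := fun i => push (PX i) (W i) in
  let QYi := fun i => push (QX i) (W i) in
  let gap := fun lam : R => Df f (RX lam) QXn - Df f (RY lam) QY in
  let B := fun lam : R =>
    prodn n (fun i => 1 + lam ^ 2 * chi2 (PX i) (QX i))
    - prodn n (fun i => 1 + lam ^ 2 * chi2 (PYi i) (QYi i)) in
  let S := sumn n (fun i => chi2 (PX i) (QX i) - chi2 (PYi i) (QYi i)) in
  let c := fun lam : R => c_f f2 (xi1 n PX QX lam) (xi2 n PX QX lam) in
  let e := fun lam : R => e_f f2 (xi1 n PX QX lam) (xi2 n PX QX lam) in
  (* (a) *)
  (forall lam, 0 <= lam <= 1 ->
     (forall i, (i < n)%nat -> summable (chi2_term (PX i) (QX i))) ->
     summable (Df_term f (RX lam) QXn) ->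
     gap lam >= c lam * B lam /\
     c lam * B lam >= c lam * lam ^ 2 * S /\
     c lam * lam ^ 2 * S >= 0) /\
  (* (b) ; e_f = +oo (None) gives the trivial bound +oo *)
  (forall lam, 0 <= lam <= 1 ->
     (forall i, (i < n)%nat -> summable (chi2_term (PX i) (QX i))) ->
     summable (Df_term f (RX lam) QXn) ->
     forall ef, e lam = Some ef -> gap lam <= ef * B lam) /\
  (* (c) *)
  (continuity_pt f2 1 ->
   (forall i, (i < n)%nat -> Sup (ratio_set (PX i) (QX i)) <> None) ->
     lim0plus (fun lam => gap lam / lam ^ 2) (/ 2 * f2 1 * S) /\
     lim0plus (fun lam => c lam * B lam / lam ^ 2) (/ 2 * f2 1 * S) /\
     lim0plus (fun lam => c lam * lam ^ 2 * S / lam ^ 2) (/ 2 * f2 1 * S) /\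
     lim0plus_opt (fun lam => match e lam with
                              | Some ef => Some (ef * B lam / lam ^ 2)
                              | None => None end) (/ 2 * f2 1 * S)).
Proof.
  intros RX QXn Wn RY QY PYi QYi gap B S c e.
  split; [|split].
  - intros lam Hl Hs HD. exact (partA X Y n PX QX W f f1 f2 HP HQ HW Hconv Hf1 Hf2 lam Hl Hs HD).
  - intros lam Hl Hs HD ef He. exact (partB X Y n PX QX W f f1 f2 HP HQ HW Hf1 Hf2 lam Hl Hs HD ef He).
  - intros Hc2 Hsup. exact (partC X Y n PX QX W f f1 f2 HP HQ HW Hconv Hf1 Hf2 Hc2 Hsup).
Qed.
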